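(* Let $f : M \to N$ be a continuous $o$-linear map between two torsionfree compact Hausdorff linear-topological $o$-modules $M$ and $N$, and let $f^d : N^d \to M^d$, $\ell \mapsto \ell \circ f$, be the induced map of $K$-Banach spaces. Then: (i) the restriction map $M^d \to \ker(f)^d$ induces an identification $\ker(f)^d = M^d/\overline{f^d(N^d)}$ (where $\ker(f)$ carries the subspace topology and $\overline{\,\cdot\,}$ denotes closure in $M^d$); (ii) the map dual to the projection $N \to \mathrm{coker}(f)_{\mathrm{cot}}$ identifies $[\mathrm{coker}(f)_{\mathrm{cot}}]^d$ with $\ker(f^d)$; (iii) $f$ is surjective if and only if $f^d$ is an isometry.
   Context: $K$ is a finite extension of $\mathbb{Q}_p$ with ring of integers $o$ and absolute value $|\cdot|$. A topological $o$-module is linear-topological if $0$ has a fundamental system of open neighbourhoods consisting of $o$-submodules. For a torsionfree compact Hausdorff linear-topological $o$-module $M$, $M^d := \mathrm{Hom}^{\mathrm{cont}}_o(M,K)$ is the $K$-Banach space of continuous $o$-linear maps $M\to K$ with norm $\|\ell\| := \max_{m\in M}|\ell(m)|$. For a Hausdorff linear-topological $o$-module $X$, $X_{\mathrm{cot}}$ denotes its unique largest quotient which is Hausdorff and torsionfree: if $(X_j)_{j\in J}$ is the family of all torsionfree Hausdorff quotient modules of $X$, then $X_{\mathrm{cot}}$ is the coimage of the natural map $X\to\prod_{j} X_j$. Here $\mathrm{coker}(f) = N/f(M)$ with the quotient topology. *)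

(* Defs.v *)
From HB Require Import structures.
From mathcomp Require Import all_boot all_order all_algebra.
From mathcomp Require Import boolp classical_sets reals.
Set Implicit Arguments. Unset Strict Implicit. Unset Printing Implicit Defensive.
Import Order.TTheory GRing.Theory Num.Theory.
Local Open Scope ring_scope.
Local Open Scope classical_set_scope.

(* The coefficient field K : a finite extension of Q_p.                     *)
Record is_padic_field (p : nat) (K : fieldType) (R : realType)
    (abs : K -> R) : Prop := {
  pf_prime : prime p;
  pf_ge0 : forall x, 0 <= abs x;
  pf_eq0 : forall x, abs x = 0 <-> x = 0;
  pf_mul : forall x y, abs (x * y) = abs x * abs y;
  pf_ultra : forall x y, abs (x + y) <= Num.max (abs x) (abs y);
  pf_char0 : forall n : nat, (n%:R : K) = 0 -> n = 0%N;
  pf_p : abs (p%:R : K) < 1;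
  pf_discrete : exists pi : K, 0 < abs pi < 1 /\
                  forall x, abs x < 1 -> abs x <= abs pi;
  pf_resfin : exists s : seq K, forall x, abs x <= 1 ->
                  exists2 y, y \in s & abs (x - y) < 1;
  pf_complete : forall u : nat -> K,
      (forall eps, 0 < eps -> exists n0 : nat, forall m n,
          (n0 <= m)%N -> (n0 <= n)%N -> abs (u m - u n) < eps) ->
      exists l, forall eps, 0 < eps -> exists n0 : nat, forall n,
          (n0 <= n)%N -> abs (u n - l) < eps }.

Record is_ring_of_integers (K : fieldType) (R : realType) (abs : K -> R)
    (o : comNzRingType) (iota : o -> K) : Prop := {
  roi_inj : injective iota;
  roi_im : forall x, abs x <= 1 <-> exists a, iota a = x }.

Record ltmod (o : Type) := LTMod {
  lt_car :> Type;
  lt_add : lt_car -> lt_car -> lt_car;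
  lt_zero : lt_car;
  lt_opp : lt_car -> lt_car;
  lt_scale : o -> lt_car -> lt_car;
  lt_open : set lt_car -> Prop }.
Arguments lt_zero {o} _.
Arguments lt_open {o} _ _.

Record is_omodule (o : comNzRingType) (M : ltmod o) : Prop := {
  om_addA : forall x y z : M, lt_add x (lt_add y z) = lt_add (lt_add x y) z;
  om_addC : forall x y : M, lt_add x y = lt_add y x;
  om_add0 : forall x : M, lt_add (lt_zero M) x = x;
  om_addN : forall x : M, lt_add (lt_opp x) x = lt_zero M;
  om_scaleA : forall (a b : o) (x : M), lt_scale a (lt_scale b x) = lt_scale (a * b) x;
  om_scale1 : forall x : M, lt_scale 1 x = x;
  om_scaleDr : forall (a : o) (x y : M),
      lt_scale a (lt_add x y) = lt_add (lt_scale a x) (lt_scale a y);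
  om_scaleDl : forall (a b : o) (x : M),
      lt_scale (a + b) x = lt_add (lt_scale a x) (lt_scale b x) }.

Record is_topology (o : Type) (M : ltmod o) : Prop := {
  top_setT : lt_open M setT;
  top_set0 : lt_open M set0;
  top_setI : forall U V, lt_open M U -> lt_open M V -> lt_open M (U `&` V);
  top_bigcup : forall F : set (set M), (forall U, F U -> lt_open M U) ->
      lt_open M [set x | exists2 U, F U & U x] }.

Definition is_submodule (o : Type) (M : ltmod o) (U : set M) : Prop :=
  [/\ U (lt_zero M),
      (forall x y : M, U x -> U y -> U (lt_add x y)) &
      (forall (a : o) (x : M), U x -> U (lt_scale a x))].

Record is_lintop_module (K : fieldType) (R : realType) (abs : K -> R)
    (o : comNzRingType) (iota : o -> K) (M : ltmod o) : Prop := {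
  ltm_mod : is_omodule M;
  ltm_top : is_topology M;
  ltm_add_cont : forall (x y : M) W, lt_open M W -> W (lt_add x y) ->
      exists U, exists V, [/\ lt_open M U, lt_open M V, U x, V y &
        forall u v : M, U u -> V v -> W (lt_add u v)];
  ltm_scale_cont : forall (a : o) (x : M) W, lt_open M W -> W (lt_scale a x) ->
      exists eps, 0 < eps /\ exists U, [/\ lt_open M U, U x &
        forall (b : o) (u : M), abs (iota b - iota a) < eps -> U u -> W (lt_scale b u)];
  ltm_linear : forall U, lt_open M U -> U (lt_zero M) ->
      exists V, [/\ lt_open M V, is_submodule V & V `<=` U] }.

Definition is_hausdorff (o : Type) (M : ltmod o) : Prop :=
  forall x y : M, x <> y -> exists U, exists V,
    [/\ lt_open M U, lt_open M V, U x, V y & U `&` V = set0].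

Definition is_compact (o : Type) (M : ltmod o) : Prop :=
  forall (I : Type) (F : I -> set M), (forall i, lt_open M (F i)) ->
    (forall x, exists i, F i x) ->
    exists (n : nat) (g : 'I_n -> I), forall x, exists j, F (g j) x.

Definition is_torsionfree (o : comNzRingType) (M : ltmod o) : Prop :=
  forall (a : o) (x : M), a <> 0 -> lt_scale a x = lt_zero M -> x = lt_zero M.

Record is_tf_compact_ltm (K : fieldType) (R : realType) (abs : K -> R)
    (o : comNzRingType) (iota : o -> K) (M : ltmod o) : Prop := {
  tcl_ltm : is_lintop_module abs iota M;
  tcl_hausdorff : is_hausdorff M;
  tcl_compact : is_compact M;
  tcl_tf : is_torsionfree M }.

Record is_cont_olinear (o : Type) (M N : ltmod o) (f : M -> N) : Prop := {
  col_add : forall x y : M, f (lt_add x y) = lt_add (f x) (f y);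
  col_scale : forall (a : o) (x : M), f (lt_scale a x) = lt_scale a (f x);
  col_cont : forall W, lt_open N W -> lt_open M (f @^-1` W) }.
Arguments is_cont_olinear {o} M N f.

Definition odual (K : fieldType) (R : realType) (abs : K -> R)
    (o : Type) (iota : o -> K) (M : ltmod o) (l : M -> K) : Prop :=
  [/\ (forall x y : M, l (lt_add x y) = l x + l y),
      (forall (a : o) (x : M), l (lt_scale a x) = iota a * l x) &
      (forall (x : M) eps, 0 < eps -> exists U, [/\ lt_open M U, U x &
          forall y : M, U y -> abs (l y - l x) < eps])].
Arguments odual {K R} abs {o} iota M l.

Definition dnorm (K : fieldType) (R : realType) (abs : K -> R)
    (o : Type) (M : ltmod o) (l : M -> K) : R :=
  sup [set abs (l m) | m in [set: M]].
Arguments dnorm {K R} abs {o} M l.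

Definition dclosure (K : fieldType) (R : realType) (abs : K -> R)
    (o : Type) (iota : o -> K) (M : ltmod o) (S : set (M -> K)) : set (M -> K) :=
  [set l | odual abs iota M l /\ forall eps, 0 < eps ->
      exists2 l', S l' & dnorm abs M (fun m => l m - l' m) < eps].
Arguments dclosure {K R} abs {o} iota M S.

Section SubMod.
Definition sub_add (o : Type) (M : ltmod o) (P : set M)
    (x y : {x : M | P x}) : {x : M | P x} :=
  match pselect (P (lt_add (proj1_sig x) (proj1_sig y))) with
  | left h => exist _ _ h | right _ => x end.
Definition sub_opp (o : Type) (M : ltmod o) (P : set M)
    (x : {x : M | P x}) : {x : M | P x} :=
  match pselect (P (lt_opp (proj1_sig x))) with
  | left h => exist _ _ h | right _ => x end.
Definition sub_scale (o : Type) (M : ltmod o) (P : set M)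
    (a : o) (x : {x : M | P x}) : {x : M | P x} :=
  match pselect (P (lt_scale a (proj1_sig x))) with
  | left h => exist _ _ h | right _ => x end.
End SubMod.

Definition subltmod (o : Type) (M : ltmod o) (P : set M)
    (h0 : P (lt_zero M)) : ltmod o :=
  @LTMod o {x : M | P x} (@sub_add o M P) (exist _ _ h0) (@sub_opp o M P)
    (@sub_scale o M P)
    (fun W => exists2 U, lt_open M U & W = [set x | U (proj1_sig x)]).

Lemma additive_zero (o : comNzRingType) (M N : ltmod o) (f : M -> N) :
  is_omodule M -> is_omodule N -> is_cont_olinear M N f ->
  f (lt_zero M) = lt_zero N.
Proof.
move=> hM hN hf.
have e : f (lt_zero M) = lt_add (f (lt_zero M)) (f (lt_zero M)).
  by rewrite -(col_add hf) (om_add0 hM).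
rewrite -[LHS](om_add0 hN) -(om_addN hN (f (lt_zero M))).
by rewrite -(om_addA hN) -e.
Qed.

Definition kerP (o : Type) (M N : ltmod o) (f : M -> N) : set M :=
  [set x | f x = lt_zero N].

Definition kerltmod (o : comNzRingType) (M N : ltmod o) (f : M -> N)
    (hM : is_omodule M) (hN : is_omodule N) (hf : is_cont_olinear M N f) :
    ltmod o :=
  @subltmod o M (kerP f) (additive_zero hM hN hf).

Definition coset (o : Type) (M : ltmod o) (V : set M) (x : M) : set M :=
  [set y | V (lt_add y (lt_opp x))].

Definition quot_car (o : Type) (M : ltmod o) (V : set M) : Type :=
  {S : set M | exists x, S = coset V x}.

Definition qproj (o : Type) (M : ltmod o) (V : set M) (x : M) : quot_car V :=
  exist _ (coset V x) (ex_intro _ x erefl).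

Definition qrepr (o : Type) (M : ltmod o) (V : set M) (S : quot_car V) : M :=
  projT1 (cid (proj2_sig S)).

Definition quot (o : Type) (M : ltmod o) (V : set M) : ltmod o :=
  @LTMod o (quot_car V)
    (fun S T => qproj V (lt_add (qrepr S) (qrepr T)))
    (qproj V (lt_zero M))
    (fun S => qproj V (lt_opp (qrepr S)))
    (fun a S => qproj V (lt_scale a (qrepr S)))
    (fun W => lt_open M (qproj V @^-1` W)).

Definition qmap (o : Type) (M : ltmod o) (V : set M) : M -> quot V :=
  @qproj o M V.

Definition coker (o : Type) (M N : ltmod o) (f : M -> N) : ltmod o :=
  quot [set n | exists m, f m = n].

(* X_cot : coimage of X -> prod_j X_j over all torsionfree Hausdorff
   quotients X_j = X / W of X, i.e. X / (intersection of all such W). *)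
Definition cot_sub (o : comNzRingType) (X : ltmod o) : set X :=
  [set x | forall W : set X, is_submodule W ->
     is_hausdorff (quot W) -> is_torsionfree (quot W) -> W x].
Arguments cot_sub {o} X.

Definition cot (o : comNzRingType) (X : ltmod o) : ltmod o := quot (cot_sub X).

Definition coker_cot_proj (o : comNzRingType) (M N : ltmod o) (f : M -> N)
    (n : N) : cot (coker f) :=
  qmap (cot_sub (coker f)) (qmap [set n | exists m, f m = n] n).

(* Main.v *)
Require Import Defs.
From HB Require Import structures.
From mathcomp Require Import all_boot all_order all_algebra.
From mathcomp Require Import boolp classical_sets reals.
From mathcomp Require Import lra ring.
Import Order.TTheory GRing.Theory Num.Theory.
Local Open Scope ring_scope.
Local Open Scope classical_set_scope.
Set Implicit Arguments. Unset Strict Implicit. Unset Printing Implicit Defensive.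

Definition mcar (o : comNzRingType) (M : ltmod o) (hM : is_omodule M) := lt_car M.
HB.instance Definition _ (o : comNzRingType) (M : ltmod o) (hM : is_omodule M) :=
  gen_eqMixin (@mcar o M hM).
HB.instance Definition _ (o : comNzRingType) (M : ltmod o) (hM : is_omodule M) :=
  gen_choiceMixin (@mcar o M hM).
HB.instance Definition _ (o : comNzRingType) (M : ltmod o) (hM : is_omodule M) :=
  GRing.isZmodule.Build (@mcar o M hM) (om_addA hM) (om_addC hM) (om_add0 hM) (om_addN hM).
HB.instance Definition _ (o : comNzRingType) (M : ltmod o) (hM : is_omodule M) :=
  GRing.Zmodule_isLmodule.Build o (@mcar o M hM) (om_scaleA hM) (om_scale1 hM)
    (om_scaleDr hM) (fun v a b => om_scaleDl hM a b v).

Section ModAlg.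
Variables (o : comNzRingType) (M : ltmod o) (hM : is_omodule M).
Notation Mz := (mcar hM).
Lemma addE (x y : M) : lt_add x y = (x : Mz) + y. Proof. by []. Qed.
Lemma scaleE a (x : M) : lt_scale a x = a *: (x : Mz). Proof. by []. Qed.
Lemma oppE (x : M) : lt_opp x = - (x : Mz). Proof. by []. Qed.
Lemma zeroE : lt_zero M = (0 : Mz). Proof. by []. Qed.
End ModAlg.

Ltac mz h := rewrite ?(addE h, scaleE h, oppE h, zeroE h).
Ltac mzin h H := rewrite ?(addE h, scaleE h, oppE h, zeroE h) in H.

Section KFacts.
Variables (p : nat) (K : fieldType) (R : realType) (abs : K -> R)
  (hK : is_padic_field p abs).

Lemma abs_ge0 x : 0 <= abs x. Proof. exact: (pf_ge0 hK x). Qed.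
Lemma abs0 : abs 0 = 0. Proof. by apply/(pf_eq0 hK). Qed.
Lemma abs_eq0 x : abs x = 0 -> x = 0. Proof. by move/(pf_eq0 hK). Qed.
Lemma absM x y : abs (x * y) = abs x * abs y. Proof. exact: (pf_mul hK x y). Qed.
Lemma abs1 : abs 1 = 1.
Proof.
have h := absM 1 1; rewrite mulr1 in h.
have h0 : abs 1 != 0 by apply/eqP => /abs_eq0 /eqP; rewrite oner_eq0.
by apply: (mulfI h0); rewrite -h mulr1.
Qed.
Lemma absN x : abs (- x) = abs x.
Proof.
have h : abs (-1) * abs (-1) = 1 by rewrite -absM mulrNN mulr1 abs1.
have h1 : abs (-1) = 1.
  have g := abs_ge0 (-1).
  have : (abs (-1) - 1) * (abs (-1) + 1) = 0 by rewrite mulrDr mulrBl h; lra.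
  move/eqP; rewrite mulf_eq0 => /orP [/eqP|/eqP]; lra.
by rewrite -mulN1r absM h1 mul1r.
Qed.
Lemma absB x y : abs (x - y) = abs (y - x).
Proof. by rewrite -absN opprB. Qed.
Lemma absX x n : abs (x ^+ n) = abs x ^+ n.
Proof. elim: n => [|n ih]; first by rewrite !expr0 abs1. by rewrite !exprS absM ih. Qed.
Lemma absV x : abs (x^-1) = (abs x)^-1.
Proof.
have [->|nx] := eqVneq x 0; first by rewrite invr0 abs0 invr0.
have h : abs x * abs x^-1 = 1 by rewrite -absM mulfV // abs1.
have hx : abs x != 0 by apply/eqP => /abs_eq0 /eqP; rewrite (negbTE nx).
by rewrite -[abs x^-1]mul1r -(mulVf hx) -mulrA h mulr1.
Qed.
Lemma abs_gt0 x : x != 0 -> 0 < abs x.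
Proof.
move=> nx; rewrite lt_neqAle abs_ge0 andbT; apply/eqP => h.
by move: nx; rewrite (abs_eq0 (esym h)) eqxx.
Qed.
Lemma absD_le x y e : abs x <= e -> abs y <= e -> abs (x + y) <= e.
Proof.
move=> hx hy; apply: le_trans (pf_ultra hK x y) _.
by rewrite ge_max hx hy.
Qed.
Lemma absD_lt x y e : abs x < e -> abs y < e -> abs (x + y) < e.
Proof.
move=> hx hy; apply: le_lt_trans (pf_ultra hK x y) _.
by rewrite gt_max hx hy.
Qed.
Lemma absB_le x y e : abs x <= e -> abs y <= e -> abs (x - y) <= e.
Proof. by move=> hx hy; apply: absD_le => //; rewrite absN. Qed.
Lemma abs_trans_le x y z e : abs (x - y) <= e -> abs (y - z) <= e -> abs (x - z) <= e.
Proof. by move=> h1 h2; have := absD_le h1 h2; rewrite addrA subrK. Qed.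
Lemma abs_trans_lt x y z e : abs (x - y) < e -> abs (y - z) < e -> abs (x - z) < e.
Proof. by move=> h1 h2; have := absD_lt h1 h2; rewrite addrA subrK. Qed.

Definition upi : K := projT1 (cid (pf_discrete hK)).
Lemma pi_prop : (0 < abs upi < 1) /\ forall x, abs x < 1 -> abs x <= abs upi.
Proof. exact: (projT2 (cid (pf_discrete hK))). Qed.
Lemma abs_pi_gt0 : 0 < abs upi. Proof. by case: pi_prop => /andP[]. Qed.
Lemma abs_pi_lt1 : abs upi < 1. Proof. by case: pi_prop => /andP[]. Qed.
Lemma pi_neq0 : upi != 0.
Proof. by apply/eqP => h; have := abs_pi_gt0; rewrite h abs0 ltxx. Qed.
Lemma pi_max x : abs x < 1 -> abs x <= abs upi. Proof. by case: pi_prop => _; apply. Qed.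
Lemma abs_piX_gt0 n : 0 < abs upi ^+ n. Proof. by rewrite exprn_gt0 // abs_pi_gt0. Qed.
Lemma abs_piX_le1 n : abs upi ^+ n <= 1.
Proof. by rewrite exprn_ile1 // ?abs_ge0 // ltW // abs_pi_lt1. Qed.
Lemma abs_piX_mono m n : (m <= n)%N -> abs upi ^+ n <= abs upi ^+ m.
Proof.
move=> h; rewrite -(subnK h) exprD ler_piMl // ?abs_piX_le1 //.
exact/ltW/abs_piX_gt0.
Qed.

Lemma bernoulli (h : R) n : 0 <= h -> 1 + n%:R * h <= (1 + h) ^+ n.
Proof.
move=> h0; elim: n => [|n ih]; first by rewrite mul0r addr0 expr0.
rewrite exprS -natr1.
have e1 : 0 <= (1 + h) ^+ n by rewrite exprn_ge0 //; lra.
have e2 : 0 <= n%:R * h by rewrite mulr_ge0 // ler0n.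
nra.
Qed.

Lemma pow_small eps : 0 < eps -> exists k, abs upi ^+ k < eps.
Proof.
move=> e0.
set r := abs upi. have r0 := abs_pi_gt0. have r1 := abs_pi_lt1.
set h := r^-1 - 1.
have h0 : 0 < h by rewrite /h subr_gt0 invf_gt1.
have b0 : 0 <= eps^-1 / h by rewrite divr_ge0 // ltW // invr_gt0.
exists (Num.bound (eps^-1 / h)).
have hb := archi_boundP b0.
set n := Num.bound _ in hb *.
have hbn := bernoulli n (ltW h0).
have e3 : 1 + h = r^-1 by rewrite /h; lra.
rewrite e3 exprVn in hbn.
have hn : eps^-1 < n%:R * h by rewrite -ltr_pdivrMr.
have rn0 : 0 < r ^+ n by rewrite exprn_gt0.
have : eps^-1 < (r ^+ n)^-1 by apply: lt_le_trans hbn; lra.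
by rewrite ltf_pV2 // ?posrE // invr_gt0.
Qed.

Lemma abs_le_all x : (forall k, abs x <= abs upi ^+ k) -> x = 0.
Proof.
move=> h; apply: abs_eq0; apply/eqP; rewrite eq_le abs_ge0 andbT.
apply/negP => /negP; rewrite -ltNge => hx.
have [k hk] := pow_small hx.
by have := h k; rewrite leNgt hk.
Qed.
End KFacts.

Definition osub (o : Type) (M : ltmod o) (U : set M) := lt_open M U /\ is_submodule U.
Arguments osub {o} M U.

Section Topo.
Variables (o : Type) (M : ltmod o) (hT : is_topology M).

Lemma open_nbhd (S : set M) :
  (forall x, S x -> exists U, [/\ lt_open M U, U x & U `<=` S]) -> lt_open M S.
Proof.
move=> h.
have -> : S = [set x | exists2 U, [set U | lt_open M U /\ U `<=` S] U & U x].
  apply/seteqP; split => x.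
    by move=> Sx; have [U [oU Ux sU]] := h x Sx; exists U.
  by move=> [U [_ sU] Ux]; apply: sU.
by apply: (top_bigcup hT) => U [].
Qed.

Lemma osubT : osub M [set: M].
Proof. by split; [exact: (top_setT hT)|split]. Qed.

Lemma osubI U V : osub M U -> osub M V -> osub M (U `&` V).
Proof.
move=> [oU [U0 UD US]] [oV [V0 VD VS]]; split; first exact: (top_setI hT).
split; [by split| move=> x y [? ?] [? ?]; split; auto | move=> a x [? ?]; split; auto].
Qed.

Lemma osub_big n (Ui : 'I_n -> set M) : (forall i, osub M (Ui i)) ->
  osub M [set z | forall i, Ui i z].
Proof.
elim: n Ui => [|n ih] Ui hU.
  have -> : [set z | forall i : 'I_0, Ui i z] = [set: M].
    by apply/seteqP; split => // z _ [].
  exact: osubT.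
have -> : [set z | forall i, Ui i z] =
   Ui ord0 `&` [set z | forall i : 'I_n, Ui (lift ord0 i) z].
  apply/seteqP; split => z.
    by move=> h; split => // i; apply: h.
  move=> [h0 h1] i; case: (unliftP ord0 i) => [j ->|->] //.
apply: osubI; first exact: hU.
by apply: ih => i; apply: hU.
Qed.
End Topo.

Section LinTop.
Variables (p : nat) (K : fieldType) (R : realType) (abs : K -> R)
  (hK : is_padic_field p abs)
  (o : comNzRingType) (iota : {rmorphism o -> K})
  (ho : is_ring_of_integers abs iota).

Lemma iota_int x : abs x <= 1 -> exists a, iota a = x.
Proof. by move/(roi_im ho x). Qed.
Lemma iota_intg a : abs (iota a) <= 1.
Proof. by apply/(roi_im ho); exists a. Qed.
Lemma iota_inj : injective iota. Proof. exact: roi_inj ho. Qed.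

Definition vpi : o := projT1 (cid (iota_int (ltW (abs_pi_lt1 hK)))).
Lemma iota_vpi : iota vpi = upi hK.
Proof. exact: (projT2 (cid (iota_int (ltW (abs_pi_lt1 hK))))). Qed.
Lemma iota_vpiX n : iota (vpi ^+ n) = upi hK ^+ n.
Proof. by rewrite rmorphXn iota_vpi. Qed.

Variables (M : ltmod o) (hL : is_lintop_module abs iota M).
Let hM := ltm_mod hL.
Let hT := ltm_top hL.

Lemma smod_opp (U : set M) x : is_submodule U -> U x -> U (lt_opp x).
Proof.
move=> [_ _ hs] ux.
have -> : lt_opp x = lt_scale (-1) x by mz hM; rewrite scaleN1r.
exact: hs.
Qed.
Lemma smod_add (U : set M) x y : is_submodule U -> U x -> U y -> U (lt_add x y).
Proof. by move=> [_ h _]; apply: h. Qed.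
Lemma smod_scale (U : set M) a x : is_submodule U -> U x -> U (lt_scale a x).
Proof. by move=> [_ _ h]; apply: h. Qed.
Lemma smod_zero (U : set M) : is_submodule U -> U (lt_zero M).
Proof. by case. Qed.

Lemma open_trans (O : set M) x : lt_open M O -> lt_open M [set u | O (lt_add x u)].
Proof.
move=> oO; apply: (open_nbhd hT) => u Ou.
have [P [Q [oP oQ Px Qu h]]] := ltm_add_cont hL oO Ou.
by exists Q; split => // v Qv; apply: h.
Qed.

Lemma nbhd_osub (O : set M) x : lt_open M O -> O x ->
  exists U, osub M U /\ forall u, U u -> O (lt_add x u).
Proof.
move=> oO Ox.
have oT := open_trans x oO.
have h0 : [set u | O (lt_add x u)] (lt_zero M) by rewrite /= (addE hM) (zeroE hM) addr0.
have [V [oV sV VU]] := ltm_linear hL oT h0.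
by exists V; split => // u /VU.
Qed.

Lemma coset_open (U : set M) x : osub M U -> lt_open M [set y | U (lt_add y (lt_opp x))].
Proof.
move=> [oU sU]; apply: (open_nbhd hT) => y Uy.
have [P [Q [oP oQ Py Qx h]]] := ltm_add_cont hL oU Uy.
exists P; split => // z Pz; exact: h.
Qed.

Lemma sub_open (S U : set M) : osub M U ->
  (forall s u, S s -> U u -> S (lt_add s u)) -> lt_open M S.
Proof.
move=> hU hS; apply: (open_nbhd hT) => s Ss.
exists [set y | U (lt_add y (lt_opp s))]; split.
- exact: coset_open.
- by rewrite /= (addE hM) (oppE hM) subrr; exact: (smod_zero hU.2).
- move=> y Uy; have := hS s _ Ss Uy.
  by mz hM; rewrite addrC subrK.
Qed.

Lemma scale_small (U : set M) x : osub M U ->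
  exists k, forall n, (k <= n)%N -> U (lt_scale (vpi ^+ n) x).
Proof.
move=> [oU sU].
have U0 : U (lt_scale 0 x) by rewrite (scaleE hM) scale0r; exact: (smod_zero sU).
have [eps [e0 [V [oV Vx h]]]] := ltm_scale_cont hL oU U0.
have [k hk] := pow_small hK e0.
exists k => n kn; apply: h => //.
rewrite rmorph0 subr0 iota_vpiX (absX hK).
exact: le_lt_trans (abs_piX_mono hK kn) hk.
Qed.

Lemma odual_bounded (hc : is_compact M) (l : M -> K) : odual abs iota M l ->
  exists B, forall m, abs (l m) <= B.
Proof.
move=> [_ _ hl].
have h : forall x, exists U, [/\ lt_open M U, U x & forall y, U y -> abs (l y - l x) < 1].
  by move=> x; apply: hl.
have [F hF] := choice h.
have hF1 : forall x, lt_open M (F x) by move=> x; case: (hF x).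
have hF2 : forall x, F x x by move=> x; case: (hF x).
have hF3 : forall x y, F x y -> abs (l y - l x) < 1 by move=> x; case: (hF x).
have [n [g hg]] := hc M F hF1 (fun x => ex_intro _ x (hF2 x)).
exists (\sum_(j < n) abs (l (g j)) + 1) => m.
have [j Fm] := hg m.
have h1 : abs (l m - l (g j)) <= 1 by apply/ltW; apply: hF3.
have h2 : abs (l (g j)) <= \sum_(j < n) abs (l (g j)).
  rewrite (bigD1 j) //= lerDl sumr_ge0 // => i _; exact: (abs_ge0 hK _).
have e : l m = (l m - l (g j)) + l (g j) by rewrite subrK.
rewrite e; apply: le_trans (pf_ultra hK _ _) _.
rewrite ge_max; apply/andP; split.
  apply: le_trans h1 _; rewrite lerDr sumr_ge0 // => i _; exact: (abs_ge0 hK _).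
by apply: le_trans h2 _; rewrite lerDl.
Qed.

Lemma dnorm_le (l : M -> K) B : (forall m, abs (l m) <= B) -> dnorm abs M l <= B.
Proof.
move=> h; apply: ge_sup; first by exists (abs (l (lt_zero M))), (lt_zero M).
by move=> _ [m _ <-]; apply: h.
Qed.

Lemma dnorm_ge (l : M -> K) B m : (forall m, abs (l m) <= B) -> abs (l m) <= dnorm abs M l.
Proof.
move=> h; apply: ub_le_sup; last by exists m.
by exists B => _ [y _ <-]; apply: h.
Qed.

Lemma cpt_cover (hc : is_compact M) (F : M -> set M) :
  (forall x, lt_open M (F x)) -> (forall x, F x x) ->
  exists n (g : 'I_n -> M), forall z, exists j, F (g j) z.
Proof. by move=> hF hx; apply: hc => // x; exists x. Qed.

Lemma cpt_sep (hc : is_compact M) (N : ltmod o) (hN : is_topology N)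
  (S : set M) (Q : M -> set N -> Prop) :
  lt_open M S ->
  (forall y U U', Q y U -> U' `<=` U -> Q y U') ->
  (forall x, ~ S x -> exists W U, [/\ lt_open M W, W x, osub N U & forall y, W y -> Q y U]) ->
  exists U, osub N U /\ forall y, ~ S y -> Q y U.
Proof.
move=> oS hQ h.
have h' : forall x, exists WU : set M * set N,
   [/\ lt_open M WU.1, WU.1 x, osub N WU.2 & forall y, WU.1 y -> S y \/ Q y WU.2].
  move=> x; case: (pselect (S x)) => Sx.
    exists (S, [set: N]); split => //; first exact: osubT hN.
    by move=> y Sy; left.
  have [W [U [oW Wx oU hW]]] := h x Sx.
  by exists (W, U); split => // y Wy; right; apply: hW.
have [F hF] := choice h'.
have hF1 : forall x, lt_open M (F x).1 by move=> x; case: (hF x).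
have hF2 : forall x, (F x).1 x by move=> x; case: (hF x).
have hF3 : forall x, osub N (F x).2 by move=> x; case: (hF x).
have hF4 : forall x y, (F x).1 y -> S y \/ Q y (F x).2 by move=> x; case: (hF x).
have [n [g hg]] := cpt_cover hc hF1 hF2.
exists [set z | forall j, (F (g j)).2 z]; split.
  by apply: osub_big => // j; exact: hF3.
move=> y nSy; have [j Fy] := hg y.
have [//|Qy] := hF4 _ y Fy.
exact: (hQ _ _ _ Qy (fun z hz => hz j)).
Qed.
End LinTop.

Definition cl (K : fieldType) (R : realType) (abs : K -> R) (x y : K) := abs (x - y) <= 1.
Arguments cl {K R} abs x y.

Record pchar (K : fieldType) (R : realType) (abs : K -> R) (o : comNzRingType)
  (iota : o -> K) (M : ltmod o) (B U : set M) (c : M -> K) : Prop := {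
  pc_add : forall x y, B x -> B y -> cl abs (c (lt_add x y)) (c x + c y);
  pc_scale : forall a x, B x -> cl abs (c (lt_scale a x)) (iota a * c x);
  pc_U : forall u, B u -> U u -> cl abs (c u) 0 }.
Arguments pchar {K R} abs {o} iota {M} B U c.

Section Cl.
Variables (p : nat) (K : fieldType) (R : realType) (abs : K -> R)
  (hK : is_padic_field p abs).
Local Notation cl := (cl abs).
Lemma cl_refl x : cl x x. Proof. by rewrite /cl subrr (abs0 hK) ler01. Qed.
Lemma cl_eq x y : x = y -> cl x y. Proof. by move->; apply: cl_refl. Qed.
Lemma cl_sym x y : cl x y -> cl y x. Proof. by rewrite /cl (absB hK). Qed.
Lemma cl_trans x y z : cl x y -> cl y z -> cl x z.
Proof. by move=> h1 h2; exact: (abs_trans_le hK h1 h2). Qed.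
Lemma cl_add x y x' y' : cl x y -> cl x' y' -> cl (x + x') (y + y').
Proof. by move=> h1 h2; have := absD_le hK h1 h2; rewrite /cl; congr (_ <= _); congr abs; ring. Qed.
Lemma cl_opp x y : cl x y -> cl (- x) (- y).
Proof. by rewrite /cl -opprD (absN hK). Qed.
Lemma cl_sub x y x' y' : cl x y -> cl x' y' -> cl (x - x') (y - y').
Proof. by move=> h1 h2; apply: cl_add => //; apply: cl_opp. Qed.
Lemma cl_mul s x y : abs s <= 1 -> cl x y -> cl (s * x) (s * y).
Proof.
move=> hs h; rewrite /cl -mulrBr (absM hK).
by rewrite -[1]mulr1 ler_pM // ?(abs_ge0 hK).
Qed.
Lemma cl_0 x : cl x 0 <-> abs x <= 1. Proof. by rewrite /cl subr0. Qed.
End Cl.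

Section Ext.
Variables (p : nat) (K : fieldType) (R : realType) (abs : K -> R)
  (hK : is_padic_field p abs)
  (o : comNzRingType) (iota : {rmorphism o -> K})
  (ho : is_ring_of_integers abs iota).
Variables (M : ltmod o) (hL : is_lintop_module abs iota M).
Let hM := ltm_mod hL.
Let hT := ltm_top hL.
Local Notation cl := (cl abs).
Local Notation pchar := (pchar abs iota).
Local Notation vpi := (vpi hK ho).
Local Notation upi := (upi hK).

Lemma pc_zero (B U : set M) c : is_submodule B -> pchar B U c -> cl (c (lt_zero M)) 0.
Proof.
move=> sB pc; have h := pc_scale pc 0 (smod_zero sB).
by rewrite rmorph0 mul0r (scaleE hM) scale0r in h.
Qed.

Lemma pc_sub (B U : set M) c (x y : M) : is_submodule B -> pchar B U c -> B x -> B y ->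
  cl (c (lt_add x (lt_opp y))) (c x - c y).
Proof.
move=> sB pc Bx By.
have Bny : B (lt_opp y) := smod_opp hL sB By.
have h1 := pc_add pc Bx Bny.
have h2 := pc_add pc Bny By.
have e : lt_add (lt_opp y) y = lt_zero M by mz hM; rewrite addNr.
rewrite e in h2.
have h3 := cl_trans hK (cl_sym hK h2) (pc_zero sB pc).
apply: (cl_trans hK h1).
have h5 := cl_sub hK h3 (cl_refl hK (c y)); rewrite addrK sub0r in h5.
exact: (cl_add hK (cl_refl hK (c x)) h5).
Qed.

Lemma div_lemma (B : set M) r j d : is_submodule B ->
  B (lt_scale (vpi ^+ j) r) -> (forall i, (i < j)%N -> ~ B (lt_scale (vpi ^+ i) r)) ->
  B (lt_scale d r) -> exists s, d = s * vpi ^+ j.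
Proof.
move=> sB Bj hmin Bd.
have [d0|dn0] := eqVneq (iota d) 0.
  by exists 0; rewrite mul0r; apply: (iota_inj ho); rewrite d0 rmorph0.
have ad0 : 0 < abs (iota d) := abs_gt0 hK dn0.
have upn0 : forall n, upi ^+ n != 0 by move=> n; rewrite expf_neq0 // pi_neq0.
have hle : abs (iota d) <= abs upi ^+ j.
  rewrite leNgt; apply/negP => hlt.
  case: j Bj hmin hlt => [|j] Bj hmin hlt.
    by move: hlt; rewrite expr0 ltNge (iota_intg ho).
  have h1 : abs (upi ^+ j.+1 / iota d) < 1.
    by rewrite (absM hK) (absV hK) (absX hK) // ltr_pdivrMr // mul1r.
  have h2 := pi_max hK h1.
  have h3 : abs (upi ^+ j / iota d) <= 1.
    have e : upi ^+ j.+1 / iota d = (upi ^+ j / iota d) * upi by rewrite exprSr mulrAC.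
    rewrite e (absM hK) in h2.
    by rewrite -(ler_pM2r (abs_pi_gt0 hK)) mul1r.
  have [t' ht'] := iota_int ho h3.
  have e : t' * d = vpi ^+ j.
    apply: (iota_inj ho); rewrite rmorphM ht' (iota_vpiX hK ho) mulfVK //.
  apply: (hmin j (ltnSn j)).
  rewrite -e -(om_scaleA hM).
  by case: sB => _ _ hs; apply: hs.
have h4 : abs (iota d / upi ^+ j) <= 1.
  by rewrite (absM hK) (absV hK) (absX hK) // ler_pdivrMr ?mul1r // abs_piX_gt0.
have [s hs] := iota_int ho h4.
exists s; apply: (iota_inj ho).
by rewrite rmorphM hs (iota_vpiX hK ho) divfK.
Qed.

Lemma exists_v (B U : set M) c r : is_submodule B -> osub M U -> U `<=` B ->
  pchar B U c -> exists v, forall d, B (lt_scale d r) -> cl (c (lt_scale d r)) (iota d * v).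
Proof.
move=> sB oU UB pc.
have [k hk] := scale_small hK ho hL r oU.
pose P := fun n => `[< B (lt_scale (vpi ^+ n) r) >].
have exP : exists n, P n by exists k; apply/asboolP; apply: UB; apply: hk.
pose j := ex_minn exP.
have [Bj hmin] : B (lt_scale (vpi ^+ j) r) /\ forall i, (i < j)%N -> ~ B (lt_scale (vpi ^+ i) r).
  rewrite /j; case: ex_minnP => m /asboolP Pm hm; split => // i lt Bi.
  by have := hm i (introT (asboolP _) Bi); rewrite leqNgt lt.
exists (c (lt_scale (vpi ^+ j) r) / upi ^+ j) => d Bd.
have [s ->] := div_lemma sB Bj hmin Bd.
have e : lt_scale (s * vpi ^+ j) r = lt_scale s (lt_scale (vpi ^+ j) r) by rewrite (om_scaleA hM).
rewrite e; apply: (cl_trans hK (pc_scale pc s Bj)); apply: (cl_eq hK).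
rewrite rmorphM (iota_vpiX hK ho) -mulrA; congr (_ * _).
by rewrite mulrC divfK // expf_neq0 // pi_neq0.
Qed.
End Ext.

Section Ext2.
Variables (p : nat) (K : fieldType) (R : realType) (abs : K -> R)
  (hK : is_padic_field p abs)
  (o : comNzRingType) (iota : {rmorphism o -> K})
  (ho : is_ring_of_integers abs iota).
Variables (M : ltmod o) (hL : is_lintop_module abs iota M).
Let hM := ltm_mod hL.
Let hT := ltm_top hL.
Local Notation cl := (cl abs).
Local Notation pchar := (pchar abs iota).

Definition Bext (B : set M) r : set M :=
  [set z | exists ba : M * o, B ba.1 /\ z = lt_add ba.1 (lt_scale ba.2 r)].

Lemma Bext_sub B r : is_submodule B -> is_submodule (Bext B r).
Proof.
move=> sB; split.
- exists (lt_zero M, 0); split; first exact: smod_zero.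
  by rewrite /= (addE hM) (scaleE hM) (zeroE hM) scale0r addr0.
- move=> x y [[b1 a1] /= [B1 ->]] [[b2 a2] /= [B2 ->]].
  exists (lt_add b1 b2, a1 + a2); split; first by apply: (smod_add sB B1 B2).
  by rewrite /=; mz hM; rewrite scalerDl addrACA.
- move=> s x [[b a] /= [Bb ->]].
  exists (lt_scale s b, s * a); split; first by case: sB => _ _; apply.
  by rewrite /=; mz hM; rewrite scalerDr scalerA.
Qed.

Lemma Bext_B (B : set M) r : B `<=` Bext B r.
Proof.
move=> b Bb; exists (b, 0); split => //.
by rewrite /= (addE hM) (scaleE hM) scale0r addr0.
Qed.

Lemma Bext_r (B : set M) r : is_submodule B -> Bext B r r.
Proof.
move=> sB; exists (lt_zero M, 1); split; first exact: smod_zero.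
by rewrite /= (addE hM) (scaleE hM) (zeroE hM) scale1r add0r.
Qed.

Definition cext (c : M -> K) (B : set M) r v : M -> K := fun z =>
  match pselect (Bext B r z) with
  | left h => c (proj1_sig (cid h)).1 + iota (proj1_sig (cid h)).2 * v
  | right _ => 0 end.

Lemma cext_wd (B U : set M) c r v b a z : is_submodule B -> pchar B U c ->
  (forall d, B (lt_scale d r) -> cl (c (lt_scale d r)) (iota d * v)) ->
  B b -> z = lt_add b (lt_scale a r) -> cl (cext c B r v z) (c b + iota a * v).
Proof.
move=> sB pc hv Bb ez; rewrite /cext; case: pselect => [h|nh]; last first.
  by exfalso; apply: nh; exists (b, a).
case: (cid h) => [[b' a'] /= [Bb' ez']].
have e : lt_scale (a - a') r = lt_add b' (lt_opp b).
  move: ez'; rewrite ez; mz hM => ez'.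
  by rewrite scalerBl -[a *: _](addKr (b : mcar hM)) ez' addrA addrK addrC.
have Bd : B (lt_scale (a - a') r) by rewrite e; apply: (smod_add sB Bb'); exact: (smod_opp hL sB Bb).
have h1 := hv _ Bd.
rewrite e in h1.
have h2 := pc_sub hK hL sB pc Bb' Bb.
have h3 := cl_trans hK (cl_sym hK h2) h1.
have h4 := cl_add hK h3 (cl_refl hK (c b + iota a' * v)).
rewrite rmorphB in h4.
have e1 : c b' - c b + (c b + iota a' * v) = c b' + iota a' * v by ring.
have e2 : (iota a - iota a') * v + (c b + iota a' * v) = c b + iota a * v by ring.
by rewrite e1 e2 in h4.
Qed.

Lemma step (B U : set M) c r v : is_submodule B -> U `<=` B -> pchar B U c ->
  (forall d, B (lt_scale d r) -> cl (c (lt_scale d r)) (iota d * v)) ->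
  pchar (Bext B r) U (cext c B r v) /\ forall b, B b -> cl (cext c B r v b) (c b).
Proof.
move=> sB UB pc hv.
have wd := fun b a z => @cext_wd B U c r v b a z sB pc hv.
split; last first.
  move=> b Bb; have := wd b 0 b Bb.
  rewrite rmorph0 mul0r addr0; apply.
  by rewrite (addE hM) (scaleE hM) scale0r addr0.
split.
- move=> x y [[b1 a1] /= [B1 ->]] [[b2 a2] /= [B2 ->]].
  have h12 := wd (lt_add b1 b2) (a1 + a2) _ (smod_add sB B1 B2) erefl.
  have h1 := wd b1 a1 _ B1 erefl.
  have h2 := wd b2 a2 _ B2 erefl.
  have e : lt_add (lt_add b1 (lt_scale a1 r)) (lt_add b2 (lt_scale a2 r)) =
      lt_add (lt_add b1 b2) (lt_scale (a1 + a2) r) by mz hM; rewrite scalerDl addrACA.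
  rewrite e; apply: (cl_trans hK h12).
  apply: (cl_trans hK _ (cl_sym hK (cl_add hK h1 h2))).
  have hc := pc_add pc B1 B2.
  apply: (cl_trans hK (cl_add hK hc (cl_refl hK (iota (a1 + a2) * v)))).
  by apply: (cl_eq hK); rewrite rmorphD; ring.
- move=> s x [[b a] /= [Bb ->]].
  have Bsb : B (lt_scale s b) by case: sB => _ _; apply.
  have e : lt_scale s (lt_add b (lt_scale a r)) = lt_add (lt_scale s b) (lt_scale (s * a) r).
    by mz hM; rewrite scalerDr scalerA.
  have h1 := wd _ _ _ Bsb e.
  have h2 := wd b a _ Bb erefl.
  apply: (cl_trans hK h1).
  apply: (cl_trans hK _ (cl_mul hK (iota_intg ho s) (cl_sym hK h2))).
  apply: (cl_trans hK (cl_add hK (pc_scale pc s Bb) (cl_refl hK (iota (s * a) * v)))).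
  by apply: (cl_eq hK); rewrite rmorphM; ring.
- move=> u _ Uu.
  have Bu := UB u Uu.
  have e : lt_add u (lt_scale 0 r) = u by mz hM; rewrite scale0r addr0.
  have h1 := wd u 0 u Bu (esym e).
  rewrite rmorph0 mul0r addr0 in h1.
  exact: (cl_trans hK h1 (pc_U pc Bu Uu)).
Qed.

Definition Bsum (A U : set M) : set M :=
  [set z | exists au : M * M, [/\ A au.1, U au.2 & z = lt_add au.1 au.2]].

Definition csum (c : M -> K) (A U : set M) : M -> K := fun z =>
  match pselect (Bsum A U z) with
  | left h => c (proj1_sig (cid h)).1
  | right _ => 0 end.

Lemma Bsum_sub A U : is_submodule A -> is_submodule U -> is_submodule (Bsum A U).
Proof.
move=> sA sU; split.
- exists (lt_zero M, lt_zero M); split; try exact: smod_zero.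
  by rewrite /= (addE hM) (zeroE hM) addr0.
- move=> x y [[a1 u1] /= [A1 U1 ->]] [[a2 u2] /= [A2 U2 ->]].
  exists (lt_add a1 a2, lt_add u1 u2); split; try by apply: smod_add.
  by rewrite /=; mz hM; rewrite addrACA.
- move=> s x [[a u] /= [Aa Uu ->]].
  exists (lt_scale s a, lt_scale s u); split; try by apply: smod_scale.
  by rewrite /=; mz hM; rewrite scalerDr.
Qed.

Lemma Bsum_A (A U : set M) : is_submodule U -> A `<=` Bsum A U.
Proof.
move=> sU a Aa; exists (a, lt_zero M); split => //; first exact: smod_zero.
by rewrite /= (addE hM) (zeroE hM) addr0.
Qed.

Lemma Bsum_U (A U : set M) : is_submodule A -> U `<=` Bsum A U.
Proof.
move=> sA u Uu; exists (lt_zero M, u); split => //; first exact: smod_zero.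
by rewrite /= (addE hM) (zeroE hM) add0r.
Qed.

Lemma csum_wd (A U : set M) c a u z : is_submodule A -> is_submodule U -> pchar A U c ->
  A a -> U u -> z = lt_add a u -> cl (csum c A U z) (c a).
Proof.
move=> sA sU pc Aa Uu ez; rewrite /csum; case: pselect => [h|nh]; last first.
  by exfalso; apply: nh; exists (a, u).
case: (cid h) => [[a' u'] /= [Aa' Uu' ez']].
have e : lt_add a (lt_opp a') = lt_add u' (lt_opp u).
  move: ez'; rewrite ez; mz hM => ez'.
  have h0 : ((a : mcar hM) - (a' : mcar hM)) + ((u : mcar hM) - (u' : mcar hM)) = 0 by rewrite addrACA -opprD ez' subrr.
  by move/eqP: h0; rewrite addr_eq0 opprB => /eqP.
have hA : A (lt_add a (lt_opp a')) by apply: smod_add => //; exact: (smod_opp hL sA Aa').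
have hU : U (lt_add a (lt_opp a')) by rewrite e; apply: smod_add => //; exact: (smod_opp hL sU Uu).
have h1 := pc_U pc hA hU.
have h2 := pc_sub hK hL sA pc Aa Aa'.
have h3 := cl_trans hK (cl_sym hK h2) h1.
have h4 := cl_sub hK (cl_refl hK (c a)) h3.
rewrite subr0 opprB addrC subrK in h4.
exact: h4.
Qed.

Lemma init (A U : set M) c : is_submodule A -> is_submodule U -> pchar A U c ->
  pchar (Bsum A U) U (csum c A U) /\ forall a, A a -> cl (csum c A U a) (c a).
Proof.
move=> sA sU pc.
have wd := fun a u z => @csum_wd A U c a u z sA sU pc.
split; last first.
  move=> a Aa; apply: (wd a (lt_zero M)) => //; first exact: smod_zero.
  by rewrite (addE hM) (zeroE hM) addr0.
split.
- move=> x y [[a1 u1] /= [A1 U1 ->]] [[a2 u2] /= [A2 U2 ->]].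
  have e : lt_add (lt_add a1 u1) (lt_add a2 u2) = lt_add (lt_add a1 a2) (lt_add u1 u2).
    by mz hM; rewrite addrACA.
  have h12 := wd _ _ _ (smod_add sA A1 A2) (smod_add sU U1 U2) e.
  have h1 := wd _ _ _ A1 U1 erefl.
  have h2 := wd _ _ _ A2 U2 erefl.
  apply: (cl_trans hK h12).
  apply: (cl_trans hK (pc_add pc A1 A2)).
  exact: (cl_sym hK (cl_add hK h1 h2)).
- move=> s x [[a u] /= [Aa Uu ->]].
  have e : lt_scale s (lt_add a u) = lt_add (lt_scale s a) (lt_scale s u).
    by mz hM; rewrite scalerDr.
  have h1 := wd _ _ _ (smod_scale s sA Aa) (smod_scale s sU Uu) e.
  have h2 := wd _ _ _ Aa Uu erefl.
  apply: (cl_trans hK h1).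
  apply: (cl_trans hK (pc_scale pc s Aa)).
  exact: (cl_mul hK (iota_intg ho s) (cl_sym hK h2)).
- move=> u _ Uu.
  have e : u = lt_add (lt_zero M) u by mz hM; rewrite add0r.
  have h := wd _ _ _ (smod_zero sA) Uu e.
  exact: (cl_trans hK h (pc_zero hL sA pc)).
Qed.

Lemma iter_ext (A U : set M) c n (g : 'I_n -> M) :
  is_submodule A -> osub M U -> pchar A U c -> forall k, (k <= n)%N ->
  exists B c', [/\ is_submodule B, U `<=` B, A `<=` B, pchar B U c' &
    (forall z, A z -> cl (c' z) (c z)) /\
    forall i : 'I_n, (i < k)%N -> B (g i)].
Proof.
move=> sA [oU sU] pc; elim => [|k ih] kn.
  have [pc0 e0] := init sA sU pc.
  exists (Bsum A U), (csum c A U); split => //.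
  - exact: Bsum_sub.
  - exact: Bsum_U.
  - exact: Bsum_A.
have [B [c' [sB UB AB pc' [hA hg]]]] := ih (ltnW kn).
have [v hv] := exists_v hK ho hL (g (Ordinal kn)) sB (conj oU sU) UB pc'.
have [pc'' e''] := step sB UB pc' hv.
exists (Bext B (g (Ordinal kn))), (cext c' B (g (Ordinal kn)) v); split.
- exact: Bext_sub.
- by move=> u /UB; apply: Bext_B.
- by move=> u /AB; apply: Bext_B.
- exact: pc''.
split.
- move=> z Az.
  have Bz : B z by apply: AB.
  exact: (cl_trans hK (e'' z Bz) (hA z Az)).
- move=> i; rewrite ltnS leq_eqVlt => /orP [/eqP ei|lt].
    have -> : i = Ordinal kn by apply: val_inj.
    exact: Bext_r.
  by apply: Bext_B; apply: hg.
Qed.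

Lemma pchar_T (B U : set M) c : (forall z, B z) -> pchar B U c -> pchar setT U c.
Proof.
move=> hB pc; split.
- by move=> x y _ _; apply: (pc_add pc).
- by move=> a x _; apply: (pc_scale pc).
- by move=> u _; apply: (pc_U pc).
Qed.

Lemma extend (hc : is_compact M) (A U : set M) c :
  is_submodule A -> osub M U -> pchar A U c ->
  exists c', pchar setT U c' /\ forall z, A z -> cl (c' z) (c z).
Proof.
move=> sA oU pc.
pose F := fun x : M => [set y | U (lt_add y (lt_opp x))].
have oF : forall x, lt_open M (F x) by move=> x; apply: (coset_open hL).
have Fx : forall x, F x x.
  by move=> x; rewrite /F /= (addE hM) (oppE hM) subrr; exact: (smod_zero oU.2).
have [n [g hg]] := cpt_cover hc oF Fx.
have [B [c' [sB UB AB pc' [hA hgB]]]] := @iter_ext A U c n g sA oU pc n (leqnn n).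
have hB : forall z, B z.
  move=> z; have [j Fz] := hg z.
  have e : z = lt_add (lt_add z (lt_opp (g j))) (g j) by mz hM; rewrite subrK.
  by rewrite e; apply: smod_add => //; [apply: UB | apply: hgB].
by exists c'; split => //; apply: pchar_T pc'.
Qed.
End Ext2.

Definition gchar (K : fieldType) (R : realType) (abs : K -> R) (o : comNzRingType)
  (iota : o -> K) (M : ltmod o) (c : M -> K) :=
  exists U, osub M U /\ pchar abs iota setT U c.
Arguments gchar {K R} abs {o} iota M c.

Section Div.
Variables (p : nat) (K : fieldType) (R : realType) (abs : K -> R)
  (hK : is_padic_field p abs)
  (o : comNzRingType) (iota : {rmorphism o -> K})
  (ho : is_ring_of_integers abs iota).
Variables (M : ltmod o) (hL : is_lintop_module abs iota M) (hc : is_compact M).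
Let hM := ltm_mod hL.
Let hT := ltm_top hL.
Local Notation cl := (cl abs).
Local Notation pchar := (pchar abs iota).
Local Notation gchar := (gchar abs iota M).
Local Notation vpi := (vpi hK ho).
Local Notation upi := (upi hK).

Lemma subT : is_submodule [set: M]. Proof. by []. Qed.

Lemma gchar_sub c x y : gchar c -> cl (c (lt_add x (lt_opp y))) (c x - c y).
Proof. by move=> [U [_ pc]]; apply: (pc_sub hK hL subT pc). Qed.

Lemma div_char (L : set M) c : is_submodule L -> lt_open M (~` L) ->
  (forall x, L (lt_scale vpi x) -> L x) -> gchar c -> (forall z, L z -> cl (c z) 0) ->
  exists d, [/\ gchar d, (forall z, L z -> cl (d z) 0) & forall x, cl (upi * d x) (c x)].
Proof.
move=> sL oL satL [V [oV pc]] cL.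
pose A := [set z | exists xy : M * M, L xy.2 /\ z = lt_add (lt_scale vpi xy.1) xy.2].
pose psi := fun z => match pselect (A z) with
  | left h => c (proj1_sig (cid h)).1 | right _ => 0 end.
have wd : forall x y z, L y -> z = lt_add (lt_scale vpi x) y -> cl (psi z) (c x).
  move=> x y z Ly ez; rewrite /psi; case: pselect => [h|nh]; last first.
    by exfalso; apply: nh; exists (x, y).
  case: (cid h) => [[x' y'] /= [Ly' ez']].
  have e : lt_scale vpi (lt_add x' (lt_opp x)) = lt_add y (lt_opp y').
    move: ez'; rewrite ez; mz hM => ez'.
    have h0 : ((vpi *: (x : mcar hM)) + (y : mcar hM)) - ((vpi *: (x' : mcar hM)) + (y' : mcar hM)) = 0.
      by rewrite ez' subrr.
    move/eqP: h0; rewrite opprD addrACA -scalerBr addr_eq0 opprB => /eqP h0.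
    have -> : (x' : mcar hM) - (x : mcar hM) = - ((x : mcar hM) - (x' : mcar hM)) by rewrite opprB.
    by rewrite scalerN h0 opprB.
  have Lx : L (lt_add x' (lt_opp x)).
    apply: satL; rewrite e; apply: smod_add => //; exact: (smod_opp hL sL Ly').
  have h1 := cL _ Lx.
  have h2 := pc_sub hK hL subT pc (I : setT x') (I : setT x).
  have h3 := cl_trans hK (cl_sym hK h2) h1.
  have h4 := cl_sub hK (cl_refl hK (c x')) h3.
  rewrite subr0 opprB addrC subrK in h4.
  exact: (cl_sym hK h4).
have sA : is_submodule A.
  split.
  - exists (lt_zero M, lt_zero M); split; first exact: smod_zero.
    by rewrite /=; mz hM; rewrite scaler0 addr0.
  - move=> z1 z2 [[x1 y1] /= [L1 ->]] [[x2 y2] /= [L2 ->]].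
    exists (lt_add x1 x2, lt_add y1 y2); split; first by apply: smod_add.
    by rewrite /=; mz hM; rewrite scalerDr addrACA.
  - move=> s z [[x y] /= [Ly ->]].
    exists (lt_scale s x, lt_scale s y); split; first by apply: smod_scale.
    by rewrite /=; mz hM; rewrite scalerDr !scalerA mulrC.
pose S := [set x | exists vl : M * M, [/\ V vl.1, L vl.2 & x = lt_add vl.1 vl.2]].
have oS : lt_open M S.
  apply: (sub_open hL oV) => s u [[v l] /= [Vv Ll ->]] Vu.
  exists (lt_add v u, l); split => //; first by apply: smod_add => //; case: oV.
  by rewrite /=; mz hM; rewrite addrAC.
have cS : forall x, S x -> cl (c x) 0.
  move=> x [[v l] /= [Vv Ll ->]].
  apply: (cl_trans hK (pc_add pc I I)).
  have := cl_add hK (pc_U pc I Vv) (cL l Ll); by rewrite addr0.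
pose Q := fun (y : M) (U : set M) => forall l, L l -> ~ U (lt_add (lt_scale vpi y) l).
have [U' [oU' hU']] : exists U, osub M U /\ forall y, ~ S y -> Q y U.
  apply: (@cpt_sep _ M hc M hT S Q oS).
    by move=> y U U1 hQ sub l Ll /sub; apply: hQ.
  move=> x nSx.
  have nL : ~ L (lt_scale vpi x).
    move=> /satL Lx; apply: nSx; exists (lt_zero M, x); split => //.
      by case: oV => _ ?; apply: smod_zero.
    by rewrite /= (addE hM) (zeroE hM) add0r.
  have [Ux [oUx hUx]] := nbhd_osub hL oL nL.
  have oW0 := coset_open hL (lt_scale vpi x) oUx.
  have W0x : [set y | Ux (lt_add y (lt_opp (lt_scale vpi x)))] (lt_scale vpi x).
    by rewrite /= (addE hM) (oppE hM) subrr; case: oUx => _ ?; apply: smod_zero.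
  have [eps [e0 [W [oW Wx hW]]]] := ltm_scale_cont hL oW0 W0x.
  exists W, Ux; split => // y Wy l Ll Uyl.
  have hy := hW vpi y; rewrite subrr (abs0 hK) in hy; have {}hy := hy e0 Wy.
  apply: (hUx (lt_add (lt_add (lt_scale vpi y) (lt_opp (lt_scale vpi x)))
                      (lt_opp (lt_add (lt_scale vpi y) l)))).
    apply: smod_add; first by case: oUx.
      exact: hy.
    by apply: (smod_opp hL); first by case: oUx.
  have e : lt_add (lt_scale vpi x) (lt_add (lt_add (lt_scale vpi y) (lt_opp (lt_scale vpi x)))
                      (lt_opp (lt_add (lt_scale vpi y) l))) = lt_opp l.
    by mz hM; rewrite addrC addrAC addrNK opprD addNKr.
  by rewrite e; apply: (smod_opp hL sL).
have pcA : pchar A U' psi.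
  split.
  - move=> z1 z2 [[x1 y1] /= [L1 ->]] [[x2 y2] /= [L2 ->]].
    have e : lt_add (lt_add (lt_scale vpi x1) y1) (lt_add (lt_scale vpi x2) y2) =
             lt_add (lt_scale vpi (lt_add x1 x2)) (lt_add y1 y2).
      by mz hM; rewrite scalerDr addrACA.
    rewrite e.
    apply: (cl_trans hK (wd _ _ _ (smod_add sL L1 L2) erefl)).
    apply: (cl_trans hK (pc_add pc I I)).
    exact: (cl_sym hK (cl_add hK (wd _ _ _ L1 erefl) (wd _ _ _ L2 erefl))).
  - move=> s z [[x y] /= [Ly ->]].
    have e : lt_scale s (lt_add (lt_scale vpi x) y) =
             lt_add (lt_scale vpi (lt_scale s x)) (lt_scale s y).
      by mz hM; rewrite scalerDr !scalerA mulrC.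
    rewrite e.
    apply: (cl_trans hK (wd _ _ _ (smod_scale s sL Ly) erefl)).
    apply: (cl_trans hK (pc_scale pc s I)).
    exact: (cl_mul hK (iota_intg ho s) (cl_sym hK (wd _ _ _ Ly erefl))).
  - move=> z [[x y] /= [Ly ez]] Uz.
    have Sx : S x.
      apply: contrapT => nSx; exact: (hU' x nSx y Ly (eq_ind _ _ Uz _ ez)).
    exact: (cl_trans hK (wd _ _ _ Ly ez) (cS x Sx)).
have [d [pcd hd]] := extend hK ho hL hc sA oU' pcA.
exists d; split.
- by exists U'.
- move=> z Lz.
  have Az : A z.
    exists (lt_zero M, z); split => //.
    by rewrite /=; mz hM; rewrite scaler0 add0r.
  apply: (cl_trans hK (hd z Az)).
  apply: (cl_trans hK (wd (lt_zero M) z z Lz _)).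
    by mz hM; rewrite scaler0 add0r.
  exact: (pc_zero hL subT pc).
- move=> x.
  have h1 := pc_scale pcd vpi (I : setT x).
  rewrite (iota_vpi hK ho) in h1.
  apply: (cl_trans hK (cl_sym hK h1)).
  have Ax : A (lt_scale vpi x).
    by exists (x, lt_zero M); split; [exact: smod_zero | rewrite /=; mz hM; rewrite addr0].
  apply: (cl_trans hK (hd _ Ax)).
  apply: (wd x (lt_zero M)); first exact: smod_zero.
  by mz hM; rewrite addr0.
Qed.
End Div.

Section Lim.
Variables (p : nat) (K : fieldType) (R : realType) (abs : K -> R)
  (hK : is_padic_field p abs)
  (o : comNzRingType) (iota : {rmorphism o -> K})
  (ho : is_ring_of_integers abs iota).
Variables (M : ltmod o) (hL : is_lintop_module abs iota M) (hc : is_compact M).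
Let hM := ltm_mod hL.
Let hT := ltm_top hL.
Local Notation cl := (cl abs).
Local Notation pchar := (pchar abs iota).
Local Notation gchar := (gchar abs iota M).
Local Notation vpi := (vpi hK ho).
Local Notation upi := (upi hK).

Lemma abs_mul_le (a b : K) (r : R) : abs a <= r -> abs b <= 1 -> abs (a * b) <= r.
Proof.
move=> ha hb; rewrite (absM hK).
have h0 := abs_ge0 hK a.
have h1 := abs_ge0 hK b.
nra.
Qed.

Lemma abs_piX_mul k (b : K) : abs b <= 1 -> abs (upi ^+ k * b) <= abs upi ^+ k.
Proof. by move=> hb; apply: abs_mul_le => //; rewrite (absX hK). Qed.

Lemma limit (e : nat -> M -> K) : (forall k, gchar (e k)) ->
  (forall k x, cl (upi * e k.+1 x) (e k x)) ->
  exists l, odual abs iota M l /\ forall k x, abs (l x - upi ^+ k * e k x) <= abs upi ^+ k.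
Proof.
move=> ge he.
pose u := fun x k => upi ^+ k * e k x.
have hstep : forall x k, abs (u x k.+1 - u x k) <= abs upi ^+ k.
  move=> x k.
  have -> : u x k.+1 - u x k = upi ^+ k * (upi * e k.+1 x - e k x) by rewrite /u exprSr; ring.
  exact: abs_piX_mul (he k x).
have hcau : forall x k d, abs (u x (k + d)%N - u x k) <= abs upi ^+ k.
  move=> x k; elim => [|d ih]; first by rewrite addn0 subrr (abs0 hK) ltW // abs_piX_gt0.
  have -> : u x (k + d.+1)%N - u x k = (u x (k + d).+1 - u x (k + d)%N) + (u x (k + d)%N - u x k).
    by rewrite addnS; ring.
  apply: (absD_le hK) => //.
  apply: le_trans (hstep _ _) _; apply: abs_piX_mono; exact: leq_addr.
have hcau2 : forall x k m, (k <= m)%N -> abs (u x m - u x k) <= abs upi ^+ k.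
  by move=> x k m /subnKC <-; apply: hcau.
have lim : forall x, exists L, forall eps, 0 < eps -> exists n0 : nat, forall n,
          (n0 <= n)%N -> abs (u x n - L) < eps.
  move=> x; apply: (pf_complete hK) => eps e0.
  have [k hk] := pow_small hK e0.
  exists k => m n km kn.
  have -> : u x m - u x n = (u x m - u x k) - (u x n - u x k) by ring.
  apply: le_lt_trans hk; apply: (absB_le hK); exact: hcau2.
have [l hl] := choice lim.
have hlk : forall x k, abs (l x - u x k) <= abs upi ^+ k.
  move=> x k; have [n0 hn0] := hl x _ (abs_piX_gt0 hK k).
  have h1 := hn0 (maxn n0 k) (leq_maxl _ _).
  have -> : l x - u x k = - (u x (maxn n0 k) - l x) + (u x (maxn n0 k) - u x k) by ring.
  apply: (absD_le hK); first by rewrite (absN hK) ltW.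
  by apply: hcau2; exact: leq_maxr.
exists l; split; last by move=> k x; apply: hlk.
split.
- move=> x y; apply/eqP; rewrite -subr_eq0; apply/eqP; apply: (@abs_le_all _ _ _ _ hK) => k.
  have [V [oV pc]] := ge k.
  have hadd := pc_add pc (I : setT x) (I : setT y).
  have -> : l (lt_add x y) - (l x + l y) =
    (l (lt_add x y) - u (lt_add x y) k) - (l x - u x k) - (l y - u y k)
    + upi ^+ k * (e k (lt_add x y) - (e k x + e k y)) by rewrite /u; ring.
  apply: (absD_le hK); last exact: abs_piX_mul.
  apply: (absB_le hK); last exact: hlk.
  by apply: (absB_le hK); exact: hlk.
- move=> a x; apply/eqP; rewrite -subr_eq0; apply/eqP; apply: (@abs_le_all _ _ _ _ hK) => k.
  have [V [oV pc]] := ge k.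
  have hs := pc_scale pc a (I : setT x).
  have -> : l (lt_scale a x) - iota a * l x =
    (l (lt_scale a x) - u (lt_scale a x) k) - iota a * (l x - u x k)
    + upi ^+ k * (e k (lt_scale a x) - iota a * e k x) by rewrite /u; ring.
  apply: (absD_le hK); last exact: abs_piX_mul.
  apply: (absB_le hK); first exact: hlk.
  rewrite mulrC; apply: abs_mul_le; [exact: hlk | exact: iota_intg].
- move=> x eps e0.
  have [k hk] := pow_small hK e0.
  have [V [oV pc]] := ge k.
  exists [set y | V (lt_add y (lt_opp x))]; split.
  + exact: (coset_open hL).
  + by rewrite /= (addE hM) (oppE hM) subrr; case: oV => _ ?; apply: smod_zero.
  + move=> y Vy.
    have h1 := gchar_sub hK hL y x (ge k).
    have h2 := pc_U pc I Vy.
    have h3 := cl_trans hK (cl_sym hK h1) h2.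
    have -> : l y - l x = (l y - u y k) - (l x - u x k) + upi ^+ k * (e k y - e k x)
      by rewrite /u; ring.
    apply: le_lt_trans hk.
    apply: (absD_le hK); last by apply: abs_piX_mul; rewrite -(cl_0 abs).
    by apply: (absB_le hK); exact: hlk.
Qed.
End Lim.

Section Cor.
Variables (p : nat) (K : fieldType) (R : realType) (abs : K -> R)
  (hK : is_padic_field p abs)
  (o : comNzRingType) (iota : {rmorphism o -> K})
  (ho : is_ring_of_integers abs iota).
Variables (M : ltmod o) (hL : is_lintop_module abs iota M) (hc : is_compact M).
Let hM := ltm_mod hL.
Let hT := ltm_top hL.
Local Notation cl := (cl abs).
Local Notation pchar := (pchar abs iota).
Local Notation gchar := (gchar abs iota M).
Local Notation vpi := (vpi hK ho).
Local Notation upi := (upi hK).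

Lemma gchar_lin (d1 d2 : M -> K) s : abs s <= 1 -> gchar d1 -> gchar d2 ->
  gchar (fun x => d1 x + s * d2 x).
Proof.
move=> hs [U1 [oU1 pc1]] [U2 [oU2 pc2]].
exists (U1 `&` U2); split; first exact: osubI.
split.
- move=> x y _ _; cbv beta.
  have h := cl_add hK (pc_add pc1 (I : setT x) (I : setT y)) (cl_mul hK hs (pc_add pc2 (I : setT x) (I : setT y))).
  apply: (cl_trans hK h); apply: (cl_eq hK); ring.
- move=> a x _; cbv beta.
  have h := cl_add hK (pc_scale pc1 a (I : setT x)) (cl_mul hK hs (pc_scale pc2 a (I : setT x))).
  apply: (cl_trans hK h); apply: (cl_eq hK); ring.
- move=> u _ [U1u U2u]; cbv beta.
  have h := cl_add hK (pc_U pc1 (I : setT u) U1u) (cl_mul hK hs (pc_U pc2 (I : setT u) U2u)).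
  by rewrite mulr0 addr0 in h.
Qed.

Lemma lift_char (L : set M) c : is_submodule L -> lt_open M (~` L) ->
  (forall x, L (lt_scale vpi x) -> L x) -> gchar c -> (forall z, L z -> cl (c z) 0) ->
  exists l, [/\ odual abs iota M l, (forall z, L z -> l z = 0) & forall x, cl (l x) (c x)].
Proof.
move=> sL oL satL gc cL.
pose P := fun d => gchar d /\ forall z, L z -> cl (d z) 0.
have hstep : forall d, exists d', P d -> P d' /\ forall x, cl (upi * d' x) (d x).
  move=> d; case: (pselect (P d)) => [[gd dL]|nP]; last by exists d.
  have [d' [g' L' h']] := div_char hL hc sL oL satL gd dL.
  by exists d'.
have [nxt hnxt] := choice hstep.
pose e := fun k => iter k nxt c.
have Pe : forall k, P (e k).
  by elim => [|k ih]; [split | rewrite /e iterS; exact: (hnxt _ ih).1].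
have [l [dl hl]] := limit ho hL (fun k => (Pe k).1)
   (fun k x => (hnxt _ (Pe k)).2 x).
exists l; split => //.
- move=> z Lz; apply: (@abs_le_all _ _ _ _ hK) => k.
  have -> : l z = (l z - upi ^+ k * e k z) + upi ^+ k * e k z by ring.
  apply: (absD_le hK); first exact: hl.
  by apply: abs_piX_mul; rewrite -(cl_0 abs); exact: (Pe k).2.
- by move=> x; have := hl 0%N x; rewrite expr0 mul1r.
Qed.

Lemma ext_exact (A : set M) lam : is_submodule A -> lt_open M (~` A) ->
  (forall x, A (lt_scale vpi x) -> A x) ->
  (forall x y, A x -> A y -> lam (lt_add x y) = lam x + lam y) ->
  (forall a x, A x -> lam (lt_scale a x) = iota a * lam x) ->
  (forall k, exists U, osub M U /\ forall z, A z -> U z -> abs (lam z) <= abs upi ^+ k) ->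
  exists l, odual abs iota M l /\ forall z, A z -> l z = lam z.
Proof.
move=> sA oA satA ladd lsc lcont.
have upn0 : forall k, upi ^+ k != 0 by move=> k; rewrite expf_neq0 // pi_neq0.
pose P := fun k d => gchar d /\ forall z, A z -> cl (d z) (lam z / upi ^+ k).
have P0 : forall k, exists d, P k d.
  move=> k; have [U [oU hU]] := lcont k.
  have pc : pchar A U (fun z => lam z / upi ^+ k).
    split.
    - by move=> x y Ax Ay; apply: (cl_eq hK); rewrite ladd // mulrDl.
    - by move=> a x Ax; apply: (cl_eq hK); rewrite lsc // mulrA.
    - move=> u Au Uu; rewrite (cl_0 abs) (absM hK) (absV hK) (absX hK).
      by rewrite ler_pdivrMr ?mul1r ?abs_piX_gt0 //; apply: hU.
  have [d [pcd hd]] := extend hK ho hL hc sA oU pc.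
  by exists d; split => //; exists U.
have hstep : forall kd : nat * (M -> K), exists d', P kd.1 kd.2 ->
    P kd.1.+1 d' /\ forall x, cl (upi * d' x) (kd.2 x).
  move=> [k d] /=; case: (pselect (P k d)) => [[gd dA]|nP]; last by exists d.
  have [e' [ge' e'A]] := P0 k.+1.
  pose delta := fun x => d x + (- upi) * e' x.
  have gdel : gchar delta by apply: gchar_lin => //; rewrite (absN hK) ltW // abs_pi_lt1.
  have delA : forall z, A z -> cl (delta z) 0.
    move=> z Az.
    have h := cl_add hK (dA z Az) (cl_mul hK (le_trans (ltW (abs_pi_lt1 hK)) (lexx _)) (cl_opp hK (e'A z Az))) .
    apply: (cl_trans hK _ (cl_eq hK (_ : lam z / upi ^+ k + upi * - (lam z / upi ^+ k.+1) = 0))).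
      by apply: (cl_trans hK _ h); apply: (cl_eq hK); rewrite /delta; ring.
    by rewrite mulrN exprSr; field; rewrite pi_neq0 upn0.
  have [d'' [g'' L'' h'']] := div_char hL hc sA oA satA gdel delA.
  exists (fun x => e' x + 1 * d'' x) => _; split.
  - split; first by apply: gchar_lin => //; rewrite (abs1 hK).
    move=> z Az; have := cl_add hK (e'A z Az) (L'' z Az).
    by rewrite addr0 mul1r.
  - move=> x; have := cl_add hK (cl_refl hK (upi * e' x)) (h'' x).
    rewrite /delta mul1r mulrDr => h; apply: (cl_trans hK h); apply: (cl_eq hK); ring.
have [nxt hnxt] := choice hstep.
have [d0 Pd0] := P0 0%N.
pose e := fix e k := if k is k'.+1 then nxt (k', e k') else d0.
have Pe : forall k, P k (e k).
  elim => [|k ih] //=; exact: (hnxt (k, e k) ih).1.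
have [l [dl hl]] := limit ho hL (fun k => (Pe k).1)
   (fun k x => (hnxt (k, e k) (Pe k)).2 x).
exists l; split => // z Az.
apply/eqP; rewrite -subr_eq0; apply/eqP; apply: (@abs_le_all _ _ _ _ hK) => k.
have -> : l z - lam z = (l z - upi ^+ k * e k z) + upi ^+ k * (e k z - lam z / upi ^+ k).
  by rewrite mulrBr [upi ^+ k * (_ / _)]mulrC divfK //; ring.
apply: (absD_le hK); first exact: hl.
by apply: abs_piX_mul; exact: (Pe k).2.
Qed.
End Cor.

Section Dual.
Variables (p : nat) (K : fieldType) (R : realType) (abs : K -> R)
  (hK : is_padic_field p abs)
  (o : comNzRingType) (iota : {rmorphism o -> K})
  (ho : is_ring_of_integers abs iota).
Local Notation cl := (cl abs).
Local Notation upi := (upi hK).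

Lemma odual_add0 (M : ltmod o) (hM : is_omodule M) l : odual abs iota M l -> l (lt_zero M) = 0.
Proof.
move=> [ha _ _]; have := ha (lt_zero M) (lt_zero M).
have -> : lt_add (lt_zero M) (lt_zero M) = lt_zero M by rewrite (addE hM) (zeroE hM) addr0.
by move=> e; apply: (@addrI _ (l (lt_zero M))); rewrite addr0; apply/esym.
Qed.

Lemma odual_lin (M : ltmod o) (hT : is_topology M) l1 l2 s :
  odual abs iota M l1 -> odual abs iota M l2 -> odual abs iota M (fun x => l1 x + s * l2 x).
Proof.
move=> [a1 s1 c1] [a2 s2 c2]; split.
- by move=> x y; rewrite a1 a2; ring.
- by move=> a x; rewrite s1 s2; ring.
- move=> x eps e0.
  have as0 := abs_ge0 hK s.
  have e1 : 0 < eps / (abs s + 1) by rewrite divr_gt0 //; lra.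
  have [U1 [o1 x1 h1]] := c1 x _ e1.
  have [U2 [o2 x2 h2]] := c2 x _ e1.
  exists (U1 `&` U2); split => //; first exact: (top_setI hT).
  move=> y [y1 y2].
  have -> : l1 y + s * l2 y - (l1 x + s * l2 x) = (l1 y - l1 x) + s * (l2 y - l2 x) by ring.
  have hle : eps / (abs s + 1) <= eps.
    by rewrite ler_pdivrMr; [nra|lra].
  apply: (absD_lt hK); first exact: lt_le_trans (h1 y y1) hle.
  rewrite (absM hK).
  have g := h2 y y2; have g0 := abs_ge0 hK (l2 y - l2 x).
  have : abs s * abs (l2 y - l2 x) <= abs s * (eps / (abs s + 1)) by rewrite ler_wpM2l // ltW.
  move=> hh; apply: le_lt_trans hh _.
  rewrite mulrA ltr_pdivrMr; nra.
Qed.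

Lemma odual_comp (M N : ltmod o) (f : M -> N) (l : N -> K) :
  is_cont_olinear M N f -> odual abs iota N l -> odual abs iota M (l \o f).
Proof.
move=> hf [a s c]; split.
- by move=> x y /=; rewrite (col_add hf) a.
- by move=> b x /=; rewrite (col_scale hf) s.
- move=> x eps e0; have [U [oU Ux hU]] := c (f x) eps e0.
  exists (f @^-1` U); split => //; first exact: (col_cont hf).
  by move=> y; apply: hU.
Qed.

Lemma dnorm_closure_vanish (M : ltmod o) (hL : is_lintop_module abs iota M)
  (hc : is_compact M) (l : M -> K) x :
  odual abs iota M l ->
  (forall eps, 0 < eps -> exists2 l' : M -> K, odual abs iota M l' /\ l' x = 0 &
     dnorm abs M (fun m => l m - l' m) < eps) -> l x = 0.
Proof.
move=> dl h; apply: (abs_eq0 hK); apply/eqP; rewrite eq_le (abs_ge0 hK) andbT.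
rewrite leNgt; apply/negP => hx.
have [l' [dl' l'x] hl'] := h _ hx.
have dd : odual abs iota M (fun m => l m + (-1) * l' m) by apply: odual_lin => //; exact: ltm_top hL.
have [B hB] := odual_bounded hK hc dd.
have hge : abs (l x - l' x) <= dnorm abs M (fun m => l m - l' m).
  by apply: (dnorm_ge x (B := B)) => m; have := hB m; rewrite mulN1r.
rewrite l'x subr0 in hge.
by have := le_lt_trans hge hl'; rewrite ltxx.
Qed.
End Dual.

Section Main1.
Variables (p : nat) (K : fieldType) (R : realType) (abs : K -> R)
  (hK : is_padic_field p abs)
  (o : comNzRingType) (iota : {rmorphism o -> K})
  (ho : is_ring_of_integers abs iota).
Variables (M N : ltmod o) (hM : is_tf_compact_ltm abs iota M)
  (hN : is_tf_compact_ltm abs iota N) (f : M -> N) (hf : is_cont_olinear M N f).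
Let hLM := tcl_ltm hM.
Let hLN := tcl_ltm hN.
Let hMM := ltm_mod hLM.
Let hNN := ltm_mod hLN.
Let hTM := ltm_top hLM.
Let hTN := ltm_top hLN.
Let hcM := tcl_compact hM.
Let hcN := tcl_compact hN.
Local Notation cl := (cl abs).
Local Notation pchar := (pchar abs iota).
Local Notation vpi := (vpi hK ho).
Local Notation upi := (upi hK).

Lemma f0 : f (lt_zero M) = lt_zero N. Proof. exact: additive_zero hMM hNN hf. Qed.

Lemma fB x y : f (lt_add x (lt_opp y)) = lt_add (f x) (lt_opp (f y)).
Proof.
have h : lt_add (f (lt_opp y)) (f y) = lt_zero N.
  by rewrite -(col_add hf) (om_addN hMM) f0.
have e : f (lt_opp y) = lt_opp (f y).
  have h' : ((f (lt_opp y) : mcar hNN) + (f y : mcar hNN) == 0) by apply/eqP; exact: h.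
  by move: h'; rewrite addr_eq0 => /eqP.
by rewrite (col_add hf) e.
Qed.

Lemma vpi_neq0 : vpi != 0.
Proof.
apply/eqP => h; have := iota_vpi hK ho; rewrite h rmorph0 => /esym /eqP.
by rewrite (negbTE (pi_neq0 hK)).
Qed.

Lemma ker_sub : is_submodule (kerP f).
Proof.
split; first exact: f0.
- move=> x y; rewrite /kerP /= (col_add hf) => -> ->.
  by rewrite (addE hNN) (zeroE hNN) addr0.
- move=> a x; rewrite /kerP /= (col_scale hf) => ->.
  by rewrite (scaleE hNN) (zeroE hNN) scaler0.
Qed.

Lemma ker_closed : lt_open M (~` kerP f).
Proof.
apply: (open_nbhd hTM) => x /= fx.
have [P [Q [oP oQ Pf Q0 PQ]]] := tcl_hausdorff hN fx.
exists (f @^-1` P); split => //; first exact: (col_cont hf).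
move=> y /= Py fy; rewrite /kerP in fy.
have : (P `&` Q) (lt_zero N) by split => //; rewrite -fy.
by rewrite PQ.
Qed.

Lemma ker_sat x : kerP f (lt_scale vpi x) -> kerP f x.
Proof.
rewrite /kerP /= (col_scale hf) => h.
by apply: (tcl_tf hN _ h); apply/eqP; exact: vpi_neq0.
Qed.

Lemma zero_sub (X : ltmod o) (hX : is_omodule X) : is_submodule [set lt_zero X].
Proof.
split => //.
- by move=> x y -> ->; rewrite (addE hX) (zeroE hX) addr0.
- by move=> a x ->; rewrite (scaleE hX) (zeroE hX) scaler0.
Qed.

Lemma zero_closed (X : ltmod o) (hT : is_topology X) : is_hausdorff X ->
  lt_open X (~` [set lt_zero X]).
Proof.
move=> hH; apply: (open_nbhd hT) => x /= nx.
have [P [Q [oP oQ Px Q0 PQ]]] := hH _ _ nx.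
exists P; split => // y Py /= ey.
have : (P `&` Q) (lt_zero X) by split => //; rewrite -ey.
by rewrite PQ.
Qed.

Lemma zero_sat (X : ltmod o) : is_torsionfree X ->
  forall x, [set lt_zero X] (lt_scale vpi x) -> [set lt_zero X] x.
Proof. by move=> htf x /= h; apply: (htf _ _ _ h); apply/eqP; exact: vpi_neq0. Qed.

Lemma img_sub : is_submodule [set n | exists m, f m = n].
Proof.
split; first by exists (lt_zero M); exact: f0.
- by move=> _ _ [m1 <-] [m2 <-]; exists (lt_add m1 m2); rewrite (col_add hf).
- by move=> a _ [m <-]; exists (lt_scale a m); rewrite (col_scale hf).
Qed.

Lemma odualB (X : ltmod o) (hX : is_omodule X) l x y : odual abs iota X l ->
  l (lt_add x (lt_opp y)) = l x - l y.
Proof.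
move=> [ha _ _]; apply/eqP; rewrite eq_sym subr_eq -ha.
by rewrite (addE hX) (oppE hX) subrK.
Qed.

Lemma approx l : odual abs iota M l -> (forall x, kerP f x -> l x = 0) ->
  forall eps, 0 < eps -> exists l0, odual abs iota N l0 /\
    dnorm abs M (fun m => l m - l0 (f m)) < eps.
Proof.
move=> dl lker eps e0.
have [k hk] := pow_small hK e0.
have upn0 : upi ^+ k != 0 by rewrite expf_neq0 // pi_neq0.
have l0z := odual_add0 hMM dl.
have [O [oO O0 hO]] := (let: And3 _ _ c := dl in c) (lt_zero M) _ (abs_piX_gt0 hK k).
have [V [oV hV]] := nbhd_osub hLM oO O0.
have lV : forall v, V v -> abs (l v) < abs upi ^+ k.
  move=> v Vv; have := hO v; rewrite l0z subr0; apply.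
  by have := hV v Vv; rewrite (addE hMM) (zeroE hMM) add0r.
pose S := [set x | exists vw : M * M, [/\ V vw.1, kerP f vw.2 & x = lt_add vw.1 vw.2]].
have oS : lt_open M S.
  apply: (sub_open hLM oV) => s u [[v w] /= [Vv kw ->]] Vu.
  exists (lt_add v u, w); split => //; first by apply: smod_add => //; case: oV.
  by rewrite /=; mz hMM; rewrite addrAC.
have lS : forall x, S x -> abs (l x) < abs upi ^+ k.
  move=> x [[v w] /= [Vv kw ->]].
  by rewrite (let: And3 a _ _ := dl in a) (lker w kw) addr0; apply: lV.
have [U' [oU' hU']] : exists U, osub N U /\ forall y, ~ S y -> ~ U (f y).
  apply: (@cpt_sep _ M hcM N hTN S (fun y U => ~ U (f y)) oS).
    by move=> y U U1 hQ sub /sub.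
  move=> x nSx.
  have fx : f x <> lt_zero N.
    move=> fx0; apply: nSx; exists (lt_zero M, x); split => //.
      by case: oV => _ ?; apply: smod_zero.
    by rewrite /= (addE hMM) (zeroE hMM) add0r.
  have [P [Q [oP oQ Pf Q0 PQ]]] := tcl_hausdorff hN fx.
  have [Ux [oUx hUx]] := nbhd_osub hLN oQ Q0.
  exists (f @^-1` P), Ux; split => //; first exact: (col_cont hf).
  move=> y Py Uy.
  have Qy : Q (f y) by have := hUx _ Uy; rewrite (addE hNN) (zeroE hNN) add0r.
  have : (P `&` Q) (f y) by [].
  by rewrite PQ.
pose A := [set n | exists m, f m = n].
pose c := fun n => match pselect (A n) with
  | left h => l (proj1_sig (cid h)) / upi ^+ k | right _ => 0 end.
have hc : forall m, c (f m) = l m / upi ^+ k.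
  move=> m; rewrite /c; case: pselect => [h|nh]; last by exfalso; apply: nh; exists m.
  case: (cid h) => m' /= e; congr (_ / _).
  have kk : kerP f (lt_add m' (lt_opp m)).
    by rewrite /kerP /= fB e; mz hNN; rewrite subrr.
  have := lker _ kk; rewrite (odualB hMM _ _ dl) => /eqP.
  by rewrite subr_eq0 => /eqP.
have pc : pchar A U' c.
  split.
  - move=> _ _ [m1 <-] [m2 <-]; apply: (cl_eq hK).
    by rewrite -(col_add hf) !hc (let: And3 a _ _ := dl in a) mulrDl.
  - move=> a _ [m <-]; apply: (cl_eq hK).
    by rewrite -(col_scale hf) !hc (let: And3 _ s _ := dl in s) mulrA.
  - move=> _ [m <-] Um; rewrite (cl_0 abs) hc.
    have Sm : S m by apply: contrapT => nS; exact: (hU' m nS Um).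
    rewrite (absM hK) (absV hK) (absX hK) ler_pdivrMr ?mul1r ?abs_piX_gt0 //.
    exact: ltW (lS m Sm).
have [c1 [pc1 hc1]] := extend hK ho hLN hcN img_sub oU' pc.
have gc1 : gchar abs iota N c1 by exists U'.
have sTN : is_submodule [set: N] by [].
have [l0 [dl0 l00 hl0]] := lift_char hLN hcN (zero_sub hNN)
   (zero_closed hTN (tcl_hausdorff hN)) (zero_sat (tcl_tf hN)) gc1
   (fun z e => eq_ind_r (fun z => cl (c1 z) 0) (pc_zero hLN sTN pc1) e).
exists (fun n => l0 n + (upi ^+ k - 1) * l0 n); split.
  exact: (odual_lin hK hTN (upi ^+ k - 1) dl0 dl0).
apply: le_lt_trans hk; apply: dnorm_le => m.
have h1 : cl (l0 (f m)) (l m / upi ^+ k).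
  apply: (cl_trans hK (hl0 (f m))).
  by rewrite -hc; apply: hc1; exists m.
have -> : l m - (l0 (f m) + (upi ^+ k - 1) * l0 (f m)) =
          - upi ^+ k * (l0 (f m) - l m / upi ^+ k).
  by field.
by rewrite mulNr (absN hK); apply: abs_piX_mul.
Qed.

Lemma surj_of_isom : (forall l, odual abs iota N l -> dnorm abs M (l \o f) = dnorm abs N l) ->
  forall n, exists m, f m = n.
Proof.
move=> iso n0; apply: contrapT => nex.
have [U [oU hU]] : exists U, osub N U /\ forall y, ~ set0 y -> ~ U (lt_add (f y) (lt_opp n0)).
  apply: (@cpt_sep _ M hcM N hTN set0 (fun y U => ~ U (lt_add (f y) (lt_opp n0))) (top_set0 hTM)).
    by move=> y U U1 hQ sub /sub.
  move=> x _.
  have fx : f x <> n0 by move=> e; apply: nex; exists x.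
  have [P [Q [oP oQ Pf Qn PQ]]] := tcl_hausdorff hN fx.
  have [Ux [oUx hUx]] := nbhd_osub hLN oQ Qn.
  exists (f @^-1` P), Ux; split => //; first exact: (col_cont hf).
  move=> y Py Uy.
  have Qy : Q (f y) by have := hUx _ Uy; mz hNN; rewrite addrC subrK.
  have : (P `&` Q) (f y) by [].
  by rewrite PQ.
pose A := [set n | exists m, f m = n].
pose B := Bsum A U.
have sB : is_submodule B := Bsum_sub hLN img_sub oU.2.
have UB : U `<=` B := Bsum_U hLN img_sub.
have AB : A `<=` B := Bsum_A hLN oU.2.
have pc0 : pchar B U (fun _ => 0).
  split.
  - by move=> x y _ _; apply: (cl_eq hK); rewrite addr0.
  - by move=> a x _; apply: (cl_eq hK); rewrite mulr0.
  - by move=> u _ _; apply: (cl_refl hK).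
have [k hk] := scale_small hK ho hLN n0 oU.
pose P := fun n => `[< B (lt_scale (vpi ^+ n) n0) >].
have exP : exists n, P n by exists k; apply/asboolP; apply: UB; apply: hk.
pose j := ex_minn exP.
have [Bj hmin] : B (lt_scale (vpi ^+ j) n0) /\ forall i, (i < j)%N -> ~ B (lt_scale (vpi ^+ i) n0).
  rewrite /j; case: ex_minnP => m /asboolP Pm hm; split => // i lt Bi.
  by have := hm i (introT (asboolP _) Bi); rewrite leqNgt lt.
have j0 : (0 < j)%N.
  rewrite lt0n; apply/eqP => ej; rewrite ej expr0 in Bj.
  have Bn : B n0 by move: Bj; rewrite (scaleE hNN) scale1r.
  case: Bn => [[a u] /= [[m <-] Uu e]].
  apply: (hU m (fun x => x)).
  have -> : lt_add (f m) (lt_opp n0) = lt_opp u by rewrite e; mz hNN; rewrite opprD addNKr.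
  exact: (smod_opp hLN oU.2 Uu).
have upn0 : upi ^+ j != 0 by rewrite expf_neq0 // pi_neq0.
pose v := (upi ^+ j)^-1.
have hv : forall d, B (lt_scale d n0) -> cl ((fun _ => 0) (lt_scale d n0)) (iota d * v).
  move=> d Bd; have [s ->] := div_lemma hLN sB Bj hmin Bd.
  rewrite /= rmorphM (iota_vpiX hK ho) /v mulfK // /cl sub0r (absN hK).
  exact: iota_intg.
have [c1 [pc1 e1 hn0]] : exists c1, [/\ pchar (Bext B n0) U c1,
     forall b, B b -> cl (c1 b) 0 & cl (c1 n0) v].
  have [pc1 e1] := step hK ho hLN sB UB pc0 hv.
  eexists; split; [exact: pc1 | exact: e1 | ].
  have := cext_wd hK hLN (U := U) (b := lt_zero N) (a := 1) (z := n0) sB pc0 hv (smod_zero sB).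
  rewrite rmorph1 mul1r add0r; apply.
  by mz hNN; rewrite scale1r add0r.
have [c2 [pc2 e2]] := extend hK ho hLN hcN (Bext_sub hLN n0 sB) oU pc1.
have gc2 : gchar abs iota N c2 by exists U.
have sTN : is_submodule [set: N] by [].
have [l [dl l0 hl]] := lift_char hLN hcN (zero_sub hNN)
   (zero_closed hTN (tcl_hausdorff hN)) (zero_sat (tcl_tf hN)) gc2
   (fun z e => eq_ind_r (fun z => cl (c2 z) 0) (pc_zero hLN sTN pc2) e).
have hfm : forall m, abs (l (f m)) <= 1.
  move=> m; rewrite -(cl_0 abs).
  have Bfm : B (f m) by apply: AB; exists m.
  apply: (cl_trans hK (hl _)).
  apply: (cl_trans hK (e2 _ (Bext_B hLN n0 Bfm))).
  exact: (e1 _ Bfm).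
have hln0 : 1 < abs (l n0).
  rewrite ltNge; apply/negP => hle.
  have hc2 : cl (l n0) v.
    apply: (cl_trans hK (hl _)).
    apply: (cl_trans hK (e2 _ (Bext_r hLN n0 sB))).
    exact: hn0.
  have : abs v <= 1.
    have -> : v = - (l n0 - v) + l n0 by ring.
    by apply: (absD_le hK) => //; rewrite (absN hK).
  rewrite /v (absV hK) (absX hK) invf_le1 ?abs_piX_gt0 // => h1.
  have : abs upi ^+ j < 1 by rewrite exprn_ilt1 ?(abs_ge0 hK) ?abs_pi_lt1 // -lt0n.
  by rewrite ltNge h1.
have [Bd hBd] := odual_bounded hK hcN dl.
have h1 : dnorm abs M (l \o f) <= 1 by apply: dnorm_le => m; apply: hfm.
have h2 : abs (l n0) <= dnorm abs N l by apply: (dnorm_ge n0 (B := Bd)).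
have := iso l dl; move=> e.
have : 1 < 1 :> R by apply: lt_le_trans hln0 _; rewrite -e in h2; apply: le_trans h2 h1.
by rewrite ltxx.
Qed.
End Main1.

Section Quot.
Variables (o : comNzRingType) (X : ltmod o) (hX : is_omodule X) (V : set X)
  (sV : is_submodule V).

Lemma sub_oppX x : V x -> V (lt_opp x).
Proof.
move=> Vx; have -> : lt_opp x = lt_scale (-1) x by mz hX; rewrite scaleN1r.
by case: sV => _ _; apply.
Qed.

Lemma qprojP a b : qproj V a = qproj V b <-> V (lt_add a (lt_opp b)).
Proof.
split.
- move=> e.
  have : coset V a a by rewrite /coset /= (addE hX) (oppE hX) subrr; case: sV.
  by move: (f_equal (@proj1_sig _ _) e) => /= ->.
- move=> h; apply: eq_exist; apply/seteqP; split => y; rewrite /coset /= => hy.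
  + have -> : lt_add y (lt_opp b) = lt_add (lt_add y (lt_opp a)) (lt_add a (lt_opp b)).
      by mz hX; rewrite addrA subrK.
    by case: sV => _ hD _; apply: hD.
  + have -> : lt_add y (lt_opp a) = lt_add (lt_add y (lt_opp b)) (lt_opp (lt_add a (lt_opp b))).
      by mz hX; rewrite opprB addrA subrK.
    by case: sV => _ hD _; apply: hD => //; apply: sub_oppX.
Qed.

Lemma qprojK (S : quot_car V) : qproj V (qrepr S) = S.
Proof.
case: S => S0 hS; rewrite /qrepr /=.
case: (cid hS) => x /= ex; rewrite /qproj.
by apply: eq_exist.
Qed.

Lemma qrepr_q x : V (lt_add (qrepr (qproj V x)) (lt_opp x)).
Proof. by apply/qprojP; rewrite qprojK. Qed.

Lemma q_add x y : lt_add (l := quot V) (qproj V x) (qproj V y) = qproj V (lt_add x y).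
Proof.
apply/qprojP.
have h1 := qrepr_q x; have h2 := qrepr_q y.
have -> : lt_add (lt_add (qrepr (qproj V x)) (qrepr (qproj V y))) (lt_opp (lt_add x y)) =
  lt_add (lt_add (qrepr (qproj V x)) (lt_opp x)) (lt_add (qrepr (qproj V y)) (lt_opp y)).
  by mz hX; rewrite opprD addrACA.
by case: sV => _ hD _; apply: hD.
Qed.

Lemma q_scale a x : lt_scale (l := quot V) a (qproj V x) = qproj V (lt_scale a x).
Proof.
apply/qprojP.
have h1 := qrepr_q x.
have -> : lt_add (lt_scale a (qrepr (qproj V x))) (lt_opp (lt_scale a x)) =
  lt_scale a (lt_add (qrepr (qproj V x)) (lt_opp x)).
  by mz hX; rewrite scalerBr.
by case: sV => _ _ hS; apply: hS.
Qed.

Lemma q_opp x : lt_opp (l := quot V) (qproj V x) = qproj V (lt_opp x).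
Proof.
apply/qprojP.
have h1 := qrepr_q x.
have -> : lt_add (lt_opp (qrepr (qproj V x))) (lt_opp (lt_opp x)) =
  lt_opp (lt_add (qrepr (qproj V x)) (lt_opp x)).
  by mz hX; rewrite opprD.
exact: sub_oppX.
Qed.

Lemma q_zero : lt_zero (quot V) = qproj V (lt_zero X). Proof. by []. Qed.

Lemma quot_omodule : is_omodule (quot V).
Proof.
split.
- move=> S T U; rewrite -(qprojK S) -(qprojK T) -(qprojK U) !q_add.
  by rewrite (om_addA hX).
- move=> S T; rewrite -(qprojK S) -(qprojK T) !q_add.
  by rewrite (om_addC hX).
- move=> S; rewrite -(qprojK S) q_zero q_add.
  by rewrite (om_add0 hX).
- move=> S; rewrite -(qprojK S) q_opp q_add q_zero.
  by rewrite (om_addN hX).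
- move=> a b S; rewrite -(qprojK S) !q_scale.
  by rewrite (om_scaleA hX).
- move=> S; rewrite -(qprojK S) q_scale.
  by rewrite (om_scale1 hX).
- move=> a S T; rewrite -(qprojK S) -(qprojK T) q_add !q_scale q_add.
  by rewrite (om_scaleDr hX).
- move=> a b S; rewrite -(qprojK S) !q_scale q_add.
  by rewrite (om_scaleDl hX).
Qed.
End Quot.

Section Coker.
Variables (p : nat) (K : fieldType) (R : realType) (abs : K -> R)
  (hK : is_padic_field p abs)
  (o : comNzRingType) (iota : {rmorphism o -> K})
  (ho : is_ring_of_integers abs iota).
Variables (M N : ltmod o) (hM : is_tf_compact_ltm abs iota M)
  (hN : is_tf_compact_ltm abs iota N) (f : M -> N) (hf : is_cont_olinear M N f).
Let hLN := tcl_ltm hN.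
Let hNN := ltm_mod hLN.
Let hTN := ltm_top hLN.

Lemma odual_ball (X : ltmod o) (hT : is_topology X) l a d :
  odual abs iota X l -> lt_open X [set x | abs (l x - a) < d].
Proof.
move=> [_ _ c]; apply: (open_nbhd hT) => x /= hx.
have d0 : 0 < d by apply: le_lt_trans hx; exact: (abs_ge0 hK _).
have [U [oU Ux hU]] := c x d d0.
exists U; split => // y Uy /=.
have -> : l y - a = (l y - l x) + (l x - a) by ring.
by apply: (absD_lt hK) => //; apply: hU.
Qed.

Let V := [set n | exists m, f m = n].
Let sV : is_submodule V := img_sub hM hN hf.
Let cokM : is_omodule (coker f) := quot_omodule hNN sV.

Lemma sW : is_submodule (cot_sub (coker f)).
Proof.
split.
- by move=> W [h0 _ _].
- move=> x y hx hy W sW0 h t; have [_ hD _] := sW0.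
  by apply: hD; [exact: hx sW0 h t | exact: hy sW0 h t].
- move=> a x hx W sW0 h t; have [_ _ hS] := sW0.
  by apply: hS; exact: hx sW0 h t.
Qed.

Let CM : is_omodule (cot (coker f)) := quot_omodule cokM sW.
Local Notation q := (coker_cot_proj f).
Local Notation C := (cot (coker f)).

Lemma q_addN x y : q (lt_add x y) = lt_add (q x) (q y).
Proof.
rewrite /coker_cot_proj /qmap /cot.
by rewrite (q_add cokM sW) (q_add hNN sV).
Qed.

Lemma q_scaleN a x : q (lt_scale a x) = lt_scale a (q x).
Proof.
rewrite /coker_cot_proj /qmap /cot.
by rewrite (q_scale cokM sW) (q_scale hNN sV).
Qed.

Lemma q_f m : q (f m) = lt_zero C.
Proof.
rewrite /coker_cot_proj /qmap /cot (q_zero (cot_sub (coker f))) /coker (q_zero V).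
congr (qproj _ _); apply/(qprojP hNN sV).
by exists m; rewrite (addE hNN) (oppE hNN) (zeroE hNN) oppr0 addr0.
Qed.

Lemma q_surj (c : C) : c = q (qrepr (qrepr c)).
Proof.
by rewrite /coker_cot_proj /qmap /coker qprojK qprojK.
Qed.

Lemma part2a lam : odual abs iota C lam ->
  odual abs iota N (lam \o q) /\ forall m, lam (q (f m)) = 0.
Proof.
move=> dl; split; last by move=> m; rewrite q_f (odual_add0 CM dl).
case: dl => a s c; split.
- by move=> x y /=; rewrite q_addN a.
- by move=> b x /=; rewrite q_scaleN s.
- move=> x eps e0; have [O [oO Ox hO]] := c (q x) eps e0.
  by exists (q @^-1` O); split => // y; apply: hO.
Qed.

Lemma part2b (lam1 lam2 : C -> K) : (forall n, lam1 (q n) = lam2 (q n)) ->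
  forall c, lam1 c = lam2 c.
Proof. by move=> h c; rewrite (q_surj c). Qed.

Lemma part2c l : odual abs iota N l -> (forall m, l (f m) = 0) ->
  exists2 lam : C -> K, odual abs iota C lam & forall n, l n = lam (q n).
Proof.
move=> dl lf.
pose lc := fun c : coker f => l (qrepr c).
have lc_q : forall n, lc (qproj V n) = l n.
  move=> n; have [m e] := qrepr_q hNN sV n.
  have := lf m; rewrite e (odualB hNN _ _ dl) => /eqP; rewrite subr_eq0 => /eqP.
  by [].
have lc_add : forall S T, lc (lt_add S T) = lc S + lc T.
  move=> S T; rewrite -(qprojK S) -(qprojK T) (q_add hNN sV) !lc_q.
  by case: dl => a _ _; apply: a.
have lc_scale : forall b S, lc (lt_scale b S) = iota b * lc S.
  move=> b S; rewrite -(qprojK S) (q_scale hNN sV) !lc_q.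
  by case: dl => _ sc _; apply: sc.
have lc_sub : forall S T, lc (lt_add S (lt_opp T)) = lc S - lc T.
  move=> S T; apply/eqP; rewrite eq_sym subr_eq -lc_add.
  by rewrite (addE cokM) (oppE cokM) subrK.
pose W0 := [set c : coker f | lc c = 0].
have sW0 : is_submodule W0.
  split.
  - rewrite /W0 /= /lc; have := lc_q (lt_zero N); rewrite /lc => ->.
    exact: (odual_add0 hNN dl).
  - by move=> x y; rewrite /W0 /= lc_add => -> ->; rewrite addr0.
  - by move=> b x; rewrite /W0 /= lc_scale => ->; rewrite mulr0.
pose lc2 := fun S : quot W0 => lc (qrepr S).
have lc2_q : forall c, lc2 (qproj W0 c) = lc c.
  move=> c; have := qrepr_q cokM sW0 c; rewrite /W0 /= lc_sub => /eqP.
  by rewrite subr_eq0 => /eqP.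
have hopen : forall (a : K) d, lt_open (quot W0) [set S | abs (lc2 S - a) < d].
  move=> a d; rewrite /quot /=.
  have -> : (qproj V @^-1` (qproj W0 @^-1` [set S | abs (lc2 S - a) < d])) =
            [set n | abs (l n - a) < d].
    by apply/seteqP; split => n /=; rewrite lc2_q lc_q.
  exact: odual_ball.
have hH : is_hausdorff (quot W0).
  move=> S T nST.
  have ne : lc2 S != lc2 T.
    apply/negP => /eqP e; apply: nST.
    rewrite -(qprojK S) -(qprojK T); apply/(qprojP cokM sW0).
    by rewrite /W0 /= lc_sub -/(lc2 S) -/(lc2 T) e subrr.
  have d0 : 0 < abs (lc2 S - lc2 T) by apply: (abs_gt0 hK); rewrite subr_eq0.
  exists [set S' | abs (lc2 S' - lc2 S) < abs (lc2 S - lc2 T)].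
  exists [set S' | abs (lc2 S' - lc2 T) < abs (lc2 S - lc2 T)].
  split; try exact: hopen.
  - by rewrite /= subrr (abs0 hK).
  - by rewrite /= subrr (abs0 hK).
  - apply/seteqP; split => // S' [h1 h2]; exfalso.
    have : abs (lc2 S - lc2 T) < abs (lc2 S - lc2 T).
      have e : lc2 S - lc2 T = - (lc2 S' - lc2 S) + (lc2 S' - lc2 T) by ring.
      rewrite {1}e; apply: (absD_lt hK); [rewrite (absN hK); exact: h1 | exact: h2].
    by rewrite ltxx.
have htf : is_torsionfree (quot W0).
  move=> b S nb e.
  rewrite -(qprojK S) in e *.
  rewrite (q_scale cokM sW0) (q_zero W0) in e.
  move/(qprojP cokM sW0): e; rewrite /W0 /= lc_sub => e.
  have lc0 : lc (lt_zero (coker f)) = 0 by have := sW0; case.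
  rewrite lc0 subr0 lc_scale in e.
  have ib : iota b != 0.
    apply/eqP => ib; apply: nb; apply: (iota_inj ho); by rewrite ib rmorph0.
  have lS : lc (qrepr S) = 0 by move/eqP: e; rewrite mulf_eq0 (negbTE ib) /= => /eqP.
  apply/(qprojP cokM sW0).
  by rewrite /W0 /= lc_sub lS lc_q (odual_add0 hNN dl) subrr.
have WW0 : cot_sub (coker f) `<=` W0 by move=> c hc; apply: hc.
pose lam := fun S : C => lc (qrepr S).
have lam_q : forall c, lam (qproj (cot_sub (coker f)) c) = lc c.
  move=> c; have := WW0 _ (qrepr_q cokM sW c); rewrite /W0 /= lc_sub => /eqP.
  by rewrite subr_eq0 => /eqP.
exists lam; last first.
  by move=> n; rewrite /coker_cot_proj /qmap lam_q lc_q.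
split.
- by move=> S T; rewrite -(qprojK S) -(qprojK T) (q_add cokM sW) !lam_q lc_add.
- by move=> b S; rewrite -(qprojK S) (q_scale cokM sW) !lam_q lc_scale.
- move=> S eps e0.
  exists [set S' | abs (lam S' - lam S) < eps]; split => //.
  + rewrite /cot /quot /=.
    have -> : (qproj V @^-1` (qproj (cot_sub (coker f)) @^-1`
                  [set S' | abs (lam S' - lam S) < eps])) =
              [set n | abs (l n - lam S) < eps].
      by apply/seteqP; split => n /=; rewrite lam_q lc_q.
    exact: odual_ball.
  + by rewrite /= subrr (abs0 hK).
Qed.
End Coker.

Lemma sig_eq (T : Type) (P : T -> Prop) (a b : {x | P x}) :
  proj1_sig a = proj1_sig b -> a = b.
Proof. by case: a b => [a pa] [b pb] /= e; apply: eq_exist. Qed.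

Section Part1.
Variables (p : nat) (K : fieldType) (R : realType) (abs : K -> R)
  (hK : is_padic_field p abs)
  (o : comNzRingType) (iota : {rmorphism o -> K})
  (ho : is_ring_of_integers abs iota).
Variables (M N : ltmod o) (hM : is_tf_compact_ltm abs iota M)
  (hN : is_tf_compact_ltm abs iota N) (f : M -> N) (hf : is_cont_olinear M N f).
Let hLM := tcl_ltm hM.
Let hLN := tcl_ltm hN.
Let hMM := ltm_mod hLM.
Let hNN := ltm_mod hLN.
Let hTM := ltm_top hLM.
Let hTN := ltm_top hLN.
Let hcM := tcl_compact hM.
Let hcN := tcl_compact hN.
Local Notation upi := (upi hK).
Local Notation Kf := (kerltmod (ltm_mod (tcl_ltm hM)) (ltm_mod (tcl_ltm hN)) hf).

Lemma val_add (x y : Kf) : proj1_sig (lt_add x y) = lt_add (proj1_sig x) (proj1_sig y).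
Proof.
rewrite /= /Defs.sub_add; case: pselect => // nh; exfalso; apply: nh.
exact: (smod_add (ker_sub hM hN hf) (proj2_sig x) (proj2_sig y)).
Qed.

Lemma val_scale a (x : Kf) : proj1_sig (lt_scale a x) = lt_scale a (proj1_sig x).
Proof.
rewrite /= /Defs.sub_scale; case: pselect => // nh; exfalso; apply: nh.
exact: (smod_scale a (ker_sub hM hN hf) (proj2_sig x)).
Qed.

Lemma part1a l : odual abs iota M l -> odual abs iota Kf (fun x => l (proj1_sig x)).
Proof.
case=> a s c; split.
- by move=> x y; rewrite val_add a.
- by move=> b x; rewrite val_scale s.
- move=> x eps e0; have [U [oU Ux hU]] := c (proj1_sig x) eps e0.
  exists [set z : Kf | U (proj1_sig z)]; split; [by exists U | by [] | ].
  by move=> y; apply: hU.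
Qed.

Lemma part1b lam : odual abs iota Kf lam ->
  exists2 l, odual abs iota M l & forall x, lam x = l (proj1_sig x).
Proof.
move=> dl; have [la ls lc] := dl.
pose lam' := fun z => match pselect (kerP f z) with
  | left h => lam (exist _ z h) | right _ => 0 end.
have lam'_eq : forall z h, lam' z = lam (exist _ z h).
  by move=> z h; rewrite /lam'; case: pselect => [h'|//]; congr lam; apply: eq_exist.
have lam0 : lam (lt_zero Kf) = 0.
  have e : lt_add (lt_zero Kf) (lt_zero Kf) = lt_zero Kf.
    by apply: sig_eq; rewrite val_add /= (addE hMM) (zeroE hMM) addr0.
  have := la (lt_zero Kf) (lt_zero Kf); rewrite e => h.
  by apply: (@addrI _ (lam (lt_zero Kf))); rewrite addr0 -h.
have hadd : forall x y, kerP f x -> kerP f y -> lam' (lt_add x y) = lam' x + lam' y.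
  move=> x y hx hy.
  rewrite (lam'_eq x hx) (lam'_eq y hy) -la.
  rewrite (lam'_eq _ (smod_add (ker_sub hM hN hf) hx hy)); congr lam.
  by apply: sig_eq; rewrite val_add.
have hsc : forall a x, kerP f x -> lam' (lt_scale a x) = iota a * lam' x.
  move=> a x hx.
  rewrite (lam'_eq x hx) -ls.
  rewrite (lam'_eq _ (smod_scale a (ker_sub hM hN hf) hx)); congr lam.
  by apply: sig_eq; rewrite val_scale.
have hco : forall k, exists U, osub M U /\ forall z, kerP f z -> U z -> abs (lam' z) <= abs upi ^+ k.
  move=> k.
  have [W [oW W0 hW]] := lc (lt_zero Kf) _ (abs_piX_gt0 hK k).
  case: oW => O oO eW.
  have O0 : O (lt_zero M) by move: W0; rewrite eW.
  have [U [oU hU]] := nbhd_osub hLM oO O0.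
  exists U; split => // z hz Uz.
  rewrite (lam'_eq z hz).
  have Wz : W (exist _ z hz).
    by rewrite eW /=; have := hU z Uz; rewrite (addE hMM) (zeroE hMM) add0r.
  by have := hW _ Wz; rewrite lam0 subr0 => /ltW.
have [l [dlM hl]] := ext_exact hLM hcM (ker_sub hM hN hf) (ker_closed hM hN hf)
  (@ker_sat _ _ _ _ hK _ _ ho _ _ hN f hf) hadd hsc hco.
exists l => // x.
by case: x => x hx /=; rewrite (hl x hx) (lam'_eq x hx).
Qed.

Lemma part1c l : odual abs iota M l ->
  ((forall x : Kf, l (proj1_sig x) = 0) <->
   dclosure abs iota M [set (fun l0 : N -> K => l0 \o f) l0 | l0 in odual abs iota N] l).
Proof.
move=> dl; split.
- move=> h; split => // eps e0.
  have lker : forall x, kerP f x -> l x = 0 by move=> x hx; exact: (h (exist _ x hx)).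
  have [l0 [dl0 hl0]] := approx hK ho hM hN hf dl lker e0.
  by exists (l0 \o f) => //; exists l0.
- move=> [_ hcl] x.
  apply: (dnorm_closure_vanish hK hLM hcM dl) => eps e0.
  have [l' [l0 dl0 <-] hl'] := hcl eps e0.
  exists (l0 \o f) => //; split; first exact: odual_comp.
  by rewrite /= (proj2_sig x) (odual_add0 hNN dl0).
Qed.

Lemma part3 : (forall n : N, exists m : M, f m = n) <->
   (forall l, odual abs iota N l -> dnorm abs M (l \o f) = dnorm abs N l).
Proof.
split; last exact: (surj_of_isom hK ho hM hN hf).
move=> hs l _; rewrite /dnorm; congr sup.
apply/seteqP; split => _ [x _ <-].
- by exists (f x).
- by have [m <-] := hs x; exists m.
Qed.
End Part1.

Unset Implicit Arguments. Set Strict Implicit.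
Theorem proposition1p3 (p : nat) (K : fieldType) (R : realType)
    (abs : K -> R) (hK : is_padic_field p abs)
    (o : comNzRingType) (iota : {rmorphism o -> K})
    (ho : is_ring_of_integers abs iota)
    (M N : ltmod o)
    (hM : is_tf_compact_ltm abs iota M) (hN : is_tf_compact_ltm abs iota N)
    (f : M -> N) (hf : is_cont_olinear M N f) :
  let Md := odual abs iota M in
  let Nd := odual abs iota N in
  let fd := fun l : N -> K => l \o f in
  (* (i) ker(f)^d = M^d / closure(f^d(N^d)) via restriction *)
  (let Kf := kerltmod (ltm_mod (tcl_ltm hM)) (ltm_mod (tcl_ltm hN)) hf in
   let res := fun (l : M -> K) (x : Kf) => l (proj1_sig x) in
   (forall l, Md l -> odual abs iota Kf (res l)) /\
   (forall lam : Kf -> K, odual abs iota Kf lam ->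
      exists2 l, Md l & forall x, lam x = res l x) /\
   (forall l, Md l ->
      ((forall x : Kf, res l x = 0) <->
       dclosure abs iota M [set fd l0 | l0 in Nd] l))) /\
  (* (ii) [coker(f)_cot]^d = ker(f^d) via the dual of N -> coker(f)_cot *)
  (let C := cot (coker f) in
   let q : N -> C := coker_cot_proj f in
   (forall lam : C -> K, odual abs iota C lam ->
      Nd (lam \o q) /\ forall m, fd (lam \o q) m = 0) /\
   (forall lam1 lam2 : C -> K, odual abs iota C lam1 -> odual abs iota C lam2 ->
      (forall n, lam1 (q n) = lam2 (q n)) -> forall c, lam1 c = lam2 c) /\
   (forall l, Nd l -> (forall m, fd l m = 0) ->
      exists2 lam : C -> K, odual abs iota C lam & forall n, l n = lam (q n))) /\
  (* (iii) f surjective <-> f^d isometry *)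
  ((forall n : N, exists m : M, f m = n) <->
   (forall l, Nd l -> dnorm abs M (fd l) = dnorm abs N l)).
Proof.
move=> Md Nd fd.
split.
  move=> Kf res; split; first by move=> l dl; exact (part1a hM hN hf dl).
  split; first by move=> lam dl; exact (part1b hK ho dl).
  by move=> l dl; exact (part1c hK ho hM hN hf dl).
split.
  move=> C q; split; first by move=> lam dl; exact (part2a hM hN hf dl).
  split; first by move=> lam1 lam2 _ _; exact (@part2b _ _ _ _ _ _ _).
  by move=> l dl hl; exact (part2c hK ho hM hN hf dl hl).
exact (part3 hK ho hM hN hf).
Qed.
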